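(* Let $n\ge4$ be even, $f>0$, and let $(\mathcal{S},\Gamma)$ be the caterpillar species tree described in the context. Let $\mathcal{T}_1$ be a gene tree drawn from the multispecies coalescent on $(\mathcal{S},\Gamma)$. Then $$\mathrm{Var}\big[d_{\mathrm g}^{\mathcal{T}_1}(a,b)\big]\ \ge\ \frac{n-2}{2}\,\mathrm{Var}\big[X_1\,\big|\,\mathcal{F}_1\big]\;\mathbf{P}[\mathcal{F}].$$
   Context: The caterpillar species tree: for even $n\ge4$, $\mathcal{S}$ is a rooted binary tree with leaves $a,b,x_1,\dots,x_{n/2-1},y_1,\dots,y_{n/2-1}$. Its backbone is the path $(a,w_1),(w_1,z_1),(z_1,w_2),(w_2,z_2),\dots,(w_{(n-2)/2},z_{(n-2)/2}),(z_{(n-2)/2},r)$ from leaf $a$ to the root $r=w_{n/2}$; each $w_i$ ($1\le i\le n/2-1$) has a pendant edge $(w_i,x_i)$ to leaf $x_i$, each $z_i$ has a pendant edge $(z_i,y_i)$ to leaf $y_i$, and $r$ has a pendant edge $(r,b)$ to leaf $b$. Each edge $(w_i,z_i)$ has length $f$; every other edge has length $g=4\log n$. The $i$-th block is the two-edge path $\{(w_i,z_i),(z_i,w_{i+1})\}$, $i=1,\dots,(n-2)/2$. Multispecies coalescent: one lineage per leaf; going backwards in time, within each branch each pair of lineages coalesces at rate 1 independently for the length of the branch; lineages of child populations are pooled at internal nodes; above the root coalescence continues until one lineage remains; $\mathcal{T}_1$ is the resulting unrooted topology and $d_{\mathrm g}^{\mathcal{T}_1}(a,b)$ the number of edges on the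 $a$–$b$ path in it. $\mathcal{F}_i$ is the event that all lineages entering $(z_i,w_{i+1})$ have coalesced into one lineage before reaching $w_{i+1}$, and $\mathcal{F}=\bigcap_i\mathcal{F}_i$. $X_i$ is the number of coalescence events occurring in the populations $(w_i,z_i)$ or $(z_i,w_{i+1})$ (the $i$-th block) in which one of the two merging lineages is ancestral to $a$ (i.e. the number of lineages coalescing into the path between $a$ and $b$ on the $i$-th block). *)

(* Defs.v *)
(* The multispecies coalescent (MSC) on the
   caterpillar species tree is modelled as a sequence of continuous-time Markov
   chains (one per backbone population), whose transition semigroup is defined
   literally as the matrix exponential exp(tQ) of the generator Q (rate 1 per
   pair of lineages).  Expectations are computed by backward composition of the
   semigroups. *)
From Stdlib Require Import Reals List Arith Bool ClassicalEpsilon.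
Import ListNotations.
Open Scope R_scope.
Open Scope bool_scope.
Open Scope R_scope.

(* limit of a real sequence (classical choice); unspecified if no limit *)
Definition Rlim (u : nat -> R) : R := epsilon (inhabits 0%R) (fun l => Un_cv u l).

Inductive label : Type := La | Lb | Lx (i : nat) | Ly (i : nat).

Inductive gtree : Type := Leaf (l : label) | Node (t1 t2 : gtree).

Definition label_eqb (l1 l2 : label) : bool :=
  match l1, l2 with
  | La, La => true | Lb, Lb => true
  | Lx i, Lx j => Nat.eqb i j | Ly i, Ly j => Nat.eqb i j
  | _, _ => false
  end.

Fixpoint mem (l : label) (t : gtree) : bool :=
  match t with
  | Leaf l' => label_eqb l l'
  | Node t1 t2 => mem l t1 || mem l t2
  end.

(* number of edges from the root of t down to leaf l (0 if absent) *)
Fixpoint depth (l : label) (t : gtree) : nat :=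
  match t with
  | Leaf _ => 0
  | Node t1 t2 => if mem l t1 then S (depth l t1)
                  else if mem l t2 then S (depth l t2) else 0
  end.

Fixpoint rdist (u v : label) (t : gtree) : nat :=
  match t with
  | Leaf _ => 0
  | Node t1 t2 =>
      if mem u t1 && mem v t1 then rdist u v t1
      else if mem u t2 && mem v t2 then rdist u v t2
      else (depth u t + depth v t)%nat
  end.

(* number of edges between u and v in the unrooted topology of t
   (the degree-2 root is suppressed: if the u-v path goes through the root,
   its two root edges become a single edge) *)
Definition udist (u v : label) (t : gtree) : nat :=
  match t with
  | Leaf _ => 0
  | Node t1 t2 =>
      if (mem u t1 && mem v t1) || (mem u t2 && mem v t2) then rdist u v t
      else (rdist u v t - 1)%nat
  end.

(* state of the process: current lineages, per-population counters of
   coalescences involving the lineage ancestral to a (most recent population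
   first), and numbers of lineages at the top of each finished population
   (most recent first) *)
Definition state : Type := (list gtree * list nat * list nat)%type.

Definition pairs (k : nat) : list (nat * nat) :=
  flat_map (fun j => map (fun i => (i, j)) (seq 0 j)) (seq 0 k).

Definition incr_head (c : list nat) : list nat :=
  match c with [] => [] | x :: r => S x :: r end.

Definition merge (s : state) (p : nat * nat) : state :=
  let '(ls, c, e) := s in
  let '(i, j) := p in
  let ti := nth i ls (Leaf La) in
  let tj := nth j ls (Leaf La) in
  let rest := map snd (filter (fun q => negb (Nat.eqb (fst q) i) && negb (Nat.eqb (fst q) j))
                              (combine (seq 0 (length ls)) ls)) in
  (rest ++ [Node ti tj],
   if mem La ti || mem La tj then incr_head c else c,
   e).

Definition nlin (s : state) : nat := let '(ls, _, _) := s in length ls.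

(* one multiplication by the generator Q, on weighted states:
   Q(s,s) = -(number of pairs), Q(s, merge s p) = 1 for each pair p *)
Definition Qstep (ws : R * state) : list (R * state) :=
  let '(w, s) := ws in
  (w * - INR (length (pairs (nlin s))), s)
    :: map (fun p => (w, merge s p)) (pairs (nlin s)).

(* row s of Q^m, as a weighted list of target states *)
Fixpoint Qpow (m : nat) (s : state) : list (R * state) :=
  match m with
  | O => [(1, s)]
  | S m' => flat_map Qstep (Qpow m' s)
  end.

Definition wsum (h : state -> R) (l : list (R * state)) : R :=
  fold_right (fun ws acc => fst ws * h (snd ws) + acc) 0 l.

(* (exp(tQ) h)(s) = E[h(state after time t) | start in s] *)
Definition semigroup (t : R) (h : state -> R) (s : state) : R :=
  Rlim (fun N => sum_f_R0 (fun m => t ^ m / INR (fact m) * wsum h (Qpow m s)) N).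

(* population of infinite length (above the root) *)
Definition semigroup_inf (h : state -> R) (s : state) : R :=
  Rlim (fun N => semigroup (INR N) h s).

(* a new pendant lineage enters and a new population begins *)
Definition open_pop (l : label) (s : state) : state :=
  let '(ls, c, e) := s in (ls ++ [Leaf l], 0%nat :: c, e).

Definition close_pop (s : state) : state :=
  let '(ls, c, e) := s in (ls, c, length ls :: e).

(* a stage: the lineage entering at the bottom node and the length of the
   population above it (None = infinite, above the root) *)
Definition stage : Type := (label * option R)%type.

Definition run_stage (st : stage) (h : state -> R) (s : state) : R :=
  let '(l, d) := st in
  match d with
  | Some t => semigroup t (fun u => h (close_pop u)) (open_pop l s)
  | None => semigroup_inf (fun u => h (close_pop u)) (open_pop l s)
  end.

Fixpoint run (sts : list stage) (h : state -> R) (s : state) : R :=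
  match sts with
  | [] => h s
  | st :: rest => run_stage st (run rest h) s
  end.

(* the caterpillar: m = (n-2)/2 blocks; block i consists of population
   (w_i,z_i) of length f entered at w_i by x_i, and population (z_i,w_{i+1}) of
   length g entered at z_i by y_i; finally b enters at the root r. *)
Definition nblocks (n : nat) : nat := ((n - 2) / 2)%nat.

Definition caterpillar_stages (n : nat) (f g : R) : list stage :=
  flat_map (fun i => [(Lx i, Some f); (Ly i, Some g)]) (seq 1 (nblocks n))
  ++ [(Lb, None)].

Definition gbranch (n : nat) : R := 4 * ln (INR n).

Definition Ecat (n : nat) (f : R) (H : state -> R) : R :=
  run (caterpillar_stages n f (gbranch n)) H ([Leaf La], [], []).

Definition gene_tree (s : state) : gtree := let '(ls, _, _) := s in hd (Leaf La) ls.

Definition dg_ab (s : state) : R := INR (udist La Lb (gene_tree s)).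

(* X_i : coalescences into the a-lineage in populations (w_i,z_i),(z_i,w_{i+1}) *)
Definition Xi (i : nat) (s : state) : R :=
  let '(_, c, _) := s in
  INR (nth (2 * (i - 1)) (rev c) 0%nat + nth (2 * (i - 1) + 1) (rev c) 0%nat)%nat.

(* F_i : one lineage at the top of population (z_i, w_{i+1}) *)
Definition Fi (i : nat) (s : state) : bool :=
  let '(_, _, e) := s in Nat.eqb (nth (2 * (i - 1) + 1) (rev e) 0%nat) 1%nat.

Definition Fall (n : nat) (s : state) : bool :=
  forallb (fun i => Fi i s) (seq 1 (nblocks n)).

Definition ind (b : bool) : R := if b then 1 else 0.

Definition Var_cat (n : nat) (f : R) (Y : state -> R) : R :=
  Ecat n f (fun s => Y s ^ 2) - (Ecat n f Y) ^ 2.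

Definition Prob_cat (n : nat) (f : R) (A : state -> bool) : R :=
  Ecat n f (fun s => ind (A s)).

Definition CondVar_cat (n : nat) (f : R) (Y : state -> R) (A : state -> bool) : R :=
  let p := Prob_cat n f A in
  Ecat n f (fun s => Y s ^ 2 * ind (A s)) / p
  - (Ecat n f (fun s => Y s * ind (A s)) / p) ^ 2.

(* Main.v *)
From Stdlib Require Import Reals List Arith Lia Lra Bool FunctionalExtensionality ClassicalEpsilon.
From Coquelicot Require Import Coquelicot.
Require Import Defs.
Import ListNotations.
Open Scope R_scope.

Definition del2k {A : Type} (k i j : nat) (l : list A) : list A :=
  map snd (filter (fun q : nat * A => negb (Nat.eqb (fst q) i) && negb (Nat.eqb (fst q) j))
                  (combine (seq k (length l)) l)).

Lemma del2k_nil {A} k i j : @del2k A k i j [] = [].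
Proof. reflexivity. Qed.

Lemma del2k_cons {A} k i j (x : A) l :
  del2k k i j (x :: l) =
  if negb (Nat.eqb k i) && negb (Nat.eqb k j) then x :: del2k (S k) i j l
  else del2k (S k) i j l.
Proof.
  unfold del2k. simpl. destruct (negb (Nat.eqb k i) && negb (Nat.eqb k j)); reflexivity.
Qed.

Lemma del2k_map {A B} (g : A -> B) k i j l :
  map g (del2k k i j l) = del2k k i j (map g l).
Proof.
  revert k; induction l as [|x l IH]; intro k; [reflexivity|].
  simpl map. rewrite !del2k_cons.
  destruct (negb (Nat.eqb k i) && negb (Nat.eqb k j)); simpl; rewrite IH; reflexivity.
Qed.

Lemma del2k_In {A} k i j (l : list A) x : In x (del2k k i j l) -> In x l.
Proof.
  revert k; induction l as [|y l IH]; intro k; [simpl; tauto|].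
  rewrite del2k_cons.
  destruct (negb (Nat.eqb k i) && negb (Nat.eqb k j)); simpl.
  - intros [H|H]; [left; auto| right; eapply IH; eauto].
  - intro H; right; eapply IH; eauto.
Qed.

Definition cnt {A} (f : A -> bool) (l : list A) : nat := length (filter f l).

Lemma del2k_small {A} k i j (l : list A) : (i < k)%nat -> (j < k)%nat -> del2k k i j l = l.
Proof.
  revert k; induction l as [|x l IH]; intros k Hi Hj; [reflexivity|].
  rewrite del2k_cons.
  replace (Nat.eqb k i) with false by (symmetry; apply Nat.eqb_neq; lia).
  replace (Nat.eqb k j) with false by (symmetry; apply Nat.eqb_neq; lia).
  simpl. rewrite IH by lia. reflexivity.
Qed.

Lemma cnt_cons {A} f (x : A) l : cnt f (x :: l) = ((if f x then 1 else 0) + cnt f l)%nat.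
Proof. unfold cnt; simpl; destruct (f x); reflexivity. Qed.

Lemma del2k_cntB {A} f d k i j (l : list A) :
  (i < k)%nat -> (k <= j < k + length l)%nat ->
  cnt f l = ((if f (nth (j - k) l d) then 1 else 0) + cnt f (del2k k i j l))%nat.
Proof.
  revert k; induction l as [|x l IH]; intros k Hi Hj; simpl in Hj; [lia|].
  rewrite del2k_cons, cnt_cons.
  replace (Nat.eqb k i) with false by (symmetry; apply Nat.eqb_neq; lia).
  destruct (Nat.eqb_spec k j).
  - subst. rewrite Nat.sub_diag. simpl. rewrite del2k_small by lia. reflexivity.
  - simpl. rewrite cnt_cons. rewrite (IH (S k)) by lia.
    replace (j - k)%nat with (S (j - S k)) by lia. simpl. lia.
Qed.

Lemma del2k_cntC {A} f d k i j (l : list A) :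
  (k <= i)%nat -> (i < j)%nat -> (j < k + length l)%nat ->
  cnt f l = ((if f (nth (i - k) l d) then 1 else 0) + (if f (nth (j - k) l d) then 1 else 0)
             + cnt f (del2k k i j l))%nat.
Proof.
  revert k; induction l as [|x l IH]; intros k Hi Hij Hj; simpl in Hj; [lia|].
  rewrite del2k_cons, cnt_cons.
  replace (Nat.eqb k j) with false by (symmetry; apply Nat.eqb_neq; lia).
  destruct (Nat.eqb_spec k i).
  - subst. rewrite Nat.sub_diag. simpl.
    rewrite (del2k_cntB f d (S i) i j l) by lia.
    replace (j - i)%nat with (S (j - S i)) by lia. simpl. lia.
  - simpl. rewrite cnt_cons. rewrite (IH (S k)) by lia.
    replace (i - k)%nat with (S (i - S k)) by lia.
    replace (j - k)%nat with (S (j - S k)) by lia. simpl. lia.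
Qed.

Lemma del2_cnt {A} f d i j (l : list A) :
  (i < j)%nat -> (j < length l)%nat ->
  cnt f l = ((if f (nth i l d) then 1 else 0) + (if f (nth j l d) then 1 else 0)
             + cnt f (del2k 0 i j l))%nat.
Proof.
  intros. rewrite (del2k_cntC f d 0 i j l) by lia. rewrite !Nat.sub_0_r. reflexivity.
Qed.

Lemma cnt_true {A} (l : list A) : cnt (fun _ => true) l = length l.
Proof. induction l; simpl; auto. unfold cnt in *; simpl; auto. Qed.

Lemma del2_length {A} i j (l : list A) :
  (i < j)%nat -> (j < length l)%nat -> length (del2k 0 i j l) = (length l - 2)%nat.
Proof.
  intros Hij Hj. destruct l as [|d l']; [simpl in Hj; lia|].
  pose proof (del2_cnt (fun _ => true) d i j (d :: l') Hij Hj) as H.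
  rewrite !cnt_true in H. lia.
Qed.

Lemma merge_eq ls c e i j :
  merge (ls, c, e) (i, j) =
  (del2k 0 i j ls ++ [Node (nth i ls (Leaf La)) (nth j ls (Leaf La))],
   if mem La (nth i ls (Leaf La)) || mem La (nth j ls (Leaf La)) then incr_head c else c, e).
Proof. reflexivity. Qed.

Lemma pairs_S k : pairs (S k) = pairs k ++ map (fun i => (i, k)) (seq 0 k).
Proof. unfold pairs. rewrite seq_S, flat_map_app. simpl. rewrite app_nil_r. reflexivity. Qed.

Lemma In_pairs k p : In p (pairs k) -> (fst p < snd p < k)%nat.
Proof.
  unfold pairs. rewrite in_flat_map. intros [j [Hj Hp]].
  apply in_map_iff in Hp. destruct Hp as [i [Hi Hin]]. subst p. simpl.
  apply in_seq in Hj. apply in_seq in Hin. lia.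
Qed.

Lemma length_pairs k : (2 * length (pairs k) = k * (k - 1))%nat.
Proof.
  induction k; [reflexivity|].
  rewrite pairs_S, length_app, length_map, length_seq.
  destruct k; simpl in *; lia.
Qed.

Lemma pairs_mono k1 k2 : (k1 <= k2)%nat -> (length (pairs k1) <= length (pairs k2))%nat.
Proof.
  intro H. pose proof (length_pairs k1). pose proof (length_pairs k2).
  assert (k1 * (k1 - 1) <= k2 * (k2 - 1))%nat by (apply Nat.mul_le_mono; lia). lia.
Qed.

Lemma nlin_merge s p : In p (pairs (nlin s)) -> nlin (merge s p) = (nlin s - 1)%nat.
Proof.
  destruct s as [[ls c] e]; destruct p as [i j]. intro H. apply In_pairs in H. simpl in H.
  rewrite merge_eq. simpl. rewrite length_app, del2_length by lia. simpl. lia.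
Qed.

Definition sumL {A : Type} (l : list A) (g : A -> R) : R :=
  fold_right (fun a acc => g a + acc) 0 l.

Definition lam (s : state) : R := INR (length (pairs (nlin s))).

Definition Qop (h : state -> R) (s : state) : R :=
  - lam s * h s + sumL (pairs (nlin s)) (fun p => h (merge s p)).

Definition Qn (m : nat) (h : state -> R) : state -> R := Nat.iter m Qop h.

Lemma sumL_ext_in {A} (l : list A) g1 g2 :
  (forall a, In a l -> g1 a = g2 a) -> sumL l g1 = sumL l g2.
Proof.
  induction l; simpl; intros H; [reflexivity|].
  rewrite H by auto. rewrite IHl by auto. reflexivity.
Qed.

Lemma sumL_lin {A} (l : list A) a b g1 g2 :
  sumL l (fun p => a * g1 p + b * g2 p) = a * sumL l g1 + b * sumL l g2.
Proof. induction l; simpl; [ring|]. rewrite IHl. ring. Qed.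

Lemma sumL_const {A} (l : list A) c : sumL l (fun _ => c) = INR (length l) * c.
Proof. induction l; simpl length; [simpl; ring|]. rewrite S_INR. simpl. rewrite IHl. ring. Qed.

Lemma sumL_abs {A} (l : list A) g B :
  (forall a, In a l -> Rabs (g a) <= B) -> Rabs (sumL l g) <= INR (length l) * B.
Proof.
  induction l; intro H.
  - simpl. rewrite Rabs_R0. lra.
  - change (length (a :: l)) with (S (length l)). rewrite S_INR. simpl sumL. eapply Rle_trans; [apply Rabs_triang|].
    pose proof (H a (or_introl eq_refl)). pose proof (IHl (fun a0 h => H a0 (or_intror h))). lra.
Qed.

Lemma sumL_nonneg {A} (l : list A) g :
  (forall a, In a l -> 0 <= g a) -> 0 <= sumL l g.
Proof.
  induction l; simpl; intro H; [lra|].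
  pose proof (H a (or_introl eq_refl)). pose proof (IHl (fun a0 h => H a0 (or_intror h))). lra.
Qed.

Lemma sumL_le {A} (l : list A) g B :
  (forall a, In a l -> g a <= B) -> sumL l g <= INR (length l) * B.
Proof.
  induction l; intro H; [simpl; lra|].
  change (length (a :: l)) with (S (length l)). rewrite S_INR. simpl sumL.
  pose proof (H a (or_introl eq_refl)). pose proof (IHl (fun a0 h => H a0 (or_intror h))). lra.
Qed.

Lemma wsum_app h l1 l2 : wsum h (l1 ++ l2) = wsum h l1 + wsum h l2.
Proof. induction l1; simpl; [ring|]. rewrite IHl1. ring. Qed.

Lemma wsum_Qstep h w s : wsum h (Qstep (w, s)) = w * Qop h s.
Proof.
  unfold Qstep, Qop, lam. simpl.
  assert (forall l, wsum h (map (fun p => (w, merge s p)) l) = w * sumL l (fun p => h (merge s p))).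
  { induction l; simpl; [ring|]. rewrite IHl. ring. }
  rewrite H. ring.
Qed.

Lemma wsum_flat h L : wsum h (flat_map Qstep L) = wsum (Qop h) L.
Proof.
  induction L as [|[w s] L IH]; [reflexivity|].
  change (flat_map Qstep ((w, s) :: L)) with (Qstep (w, s) ++ flat_map Qstep L).
  rewrite wsum_app, IH, wsum_Qstep. reflexivity.
Qed.

Lemma wsum_Qpow m : forall h s, wsum h (Qpow m s) = Qn m h s.
Proof.
  induction m; intros h s.
  - simpl. ring.
  - simpl Qpow. rewrite wsum_flat, IHm. unfold Qn. rewrite Nat.iter_swap. reflexivity.
Qed.

Definition psum (t : R) (h : state -> R) (s : state) (N : nat) : R :=
  sum_f_R0 (fun m => t ^ m / INR (fact m) * Qn m h s) N.

Lemma semigroup_eq t h s : semigroup t h s = Rlim (psum t h s).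
Proof.
  unfold semigroup, psum. f_equal. apply functional_extensionality; intro N.
  apply sum_eq. intros. rewrite wsum_Qpow. reflexivity.
Qed.

Lemma Rlim_spec u l : Un_cv u l -> Rlim u = l.
Proof.
  intro H. unfold Rlim.
  assert (Hex : exists l0, Un_cv u l0) by (exists l; exact H).
  pose proof (epsilon_spec (inhabits 0) (fun l0 => Un_cv u l0) Hex) as H2.
  eapply UL_sequence; eauto.
Qed.

Definition bisim (Rel : state -> state -> Prop) : Prop :=
  forall x x', Rel x x' -> nlin x = nlin x' /\
     forall p, In p (pairs (nlin x)) -> Rel (merge x p) (merge x' p).

Lemma Qop_bisim Rel h h' : bisim Rel -> (forall x x', Rel x x' -> h x = h' x') ->
  forall x x', Rel x x' -> Qop h x = Qop h' x'.
Proof.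
  intros HB Hh x x' Hx. destruct (HB x x' Hx) as [Hn Hm].
  unfold Qop, lam. rewrite <- Hn. rewrite (Hh x x' Hx). f_equal.
  apply sumL_ext_in. intros p Hp. apply Hh. apply Hm. exact Hp.
Qed.

Lemma Qn_bisim Rel m h h' : bisim Rel -> (forall x x', Rel x x' -> h x = h' x') ->
  forall x x', Rel x x' -> Qn m h x = Qn m h' x'.
Proof.
  intros HB Hh. induction m; intros x x' Hx; [simpl; auto|].
  unfold Qn; simpl. eapply Qop_bisim; eauto.
Qed.

Lemma semigroup_bisim Rel t h h' : bisim Rel -> (forall x x', Rel x x' -> h x = h' x') ->
  forall x x', Rel x x' -> semigroup t h x = semigroup t h' x'.
Proof.
  intros HB Hh x x' Hx. rewrite !semigroup_eq. f_equal.
  apply functional_extensionality; intro N. unfold psum. apply sum_eq; intros.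
  erewrite Qn_bisim; eauto.
Qed.

Lemma semigroup_inf_bisim Rel h h' : bisim Rel -> (forall x x', Rel x x' -> h x = h' x') ->
  forall x x', Rel x x' -> semigroup_inf h x = semigroup_inf h' x'.
Proof.
  intros HB Hh x x' Hx. unfold semigroup_inf. f_equal.
  apply functional_extensionality; intro N. eapply semigroup_bisim; eauto.
Qed.

Lemma Qop_lin a b h1 h2 s :
  Qop (fun x => a * h1 x + b * h2 x) s = a * Qop h1 s + b * Qop h2 s.
Proof. unfold Qop. rewrite sumL_lin. ring. Qed.

Lemma Qn_lin m a b h1 h2 :
  Qn m (fun x => a * h1 x + b * h2 x) = fun x => a * Qn m h1 x + b * Qn m h2 x.
Proof.
  induction m; [reflexivity|].
  unfold Qn in *; simpl. rewrite IHm. apply functional_extensionality; intro x.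
  apply Qop_lin.
Qed.

Lemma Qop_const c s : Qop (fun _ => c) s = 0.
Proof. unfold Qop, lam. rewrite sumL_const. ring. Qed.

Lemma Qn_const m c : Qn (S m) (fun _ => c) = fun _ => 0.
Proof.
  induction m.
  - apply functional_extensionality; intro x. unfold Qn; simpl. apply Qop_const.
  - unfold Qn in *. simpl in *. rewrite IHm. apply functional_extensionality; intro x.
    apply Qop_const.
Qed.

Lemma psum_const t c s N : psum t (fun _ => c) s N = c.
Proof.
  induction N.
  - unfold psum. simpl. field.
  - unfold psum in *. rewrite tech5, IHN. rewrite Qn_const. ring.
Qed.

Lemma semigroup_const t c s : semigroup t (fun _ => c) s = c.
Proof.
  rewrite semigroup_eq. apply Rlim_spec.
  intros eps He. exists 0%nat. intros n _. rewrite psum_const. unfold Rdist.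
  rewrite Rminus_diag, Rabs_R0. lra.
Qed.

Lemma semigroup_inf_const c s : semigroup_inf (fun _ => c) s = c.
Proof.
  unfold semigroup_inf. apply Rlim_spec.
  intros eps He. exists 0%nat. intros n _. rewrite semigroup_const. unfold Rdist.
  rewrite Rminus_diag, Rabs_R0. lra.
Qed.

Inductive Reach : state -> state -> Prop :=
| Reach0 s : Reach s s
| ReachS s p x : In p (pairs (nlin s)) -> Reach (merge s p) x -> Reach s x.

Lemma Reach_step s x p : Reach s x -> In p (pairs (nlin x)) -> Reach s (merge x p).
Proof.
  induction 1; intro Hp.
  - eapply ReachS; [exact Hp| apply Reach0].
  - eapply ReachS; [exact H| auto].
Qed.

Lemma Reach_nlin s x : Reach s x -> (nlin x <= nlin s)%nat.
Proof.
  induction 1; [lia|]. rewrite nlin_merge in IHReach by auto. lia.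
Qed.

Lemma lam_nonneg x : 0 <= lam x.
Proof. unfold lam. apply pos_INR. Qed.

Lemma lam_Reach s x : Reach s x -> lam x <= lam s.
Proof.
  intro H. unfold lam. apply le_INR. apply pairs_mono. apply Reach_nlin; auto.
Qed.

Lemma bounded_list h s (L : list (nat * nat)) :
  (forall p, In p L -> exists M, 0 <= M /\ forall x, Reach (merge s p) x -> Rabs (h x) <= M) ->
  exists M, 0 <= M /\ forall p, In p L -> forall x, Reach (merge s p) x -> Rabs (h x) <= M.
Proof.
  induction L as [|p L IH]; intro H.
  - exists 0. split; [lra| intros p []].
  - destruct (H p (or_introl eq_refl)) as [M1 [HM1 H1]].
    destruct (IH (fun q hq => H q (or_intror hq))) as [M2 [HM2 H2]].
    exists (Rmax M1 M2). split; [apply Rle_trans with M1; [auto|apply Rmax_l]|].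
    intros q [Hq|Hq] x Hx.
    + subst q. eapply Rle_trans; [apply H1; auto| apply Rmax_l].
    + eapply Rle_trans; [apply (H2 q); auto| apply Rmax_r].
Qed.

Lemma Reach_bounded h s : exists M, 0 <= M /\ forall x, Reach s x -> Rabs (h x) <= M.
Proof.
  assert (forall k s, (nlin s <= k)%nat ->
            exists M, 0 <= M /\ forall x, Reach s x -> Rabs (h x) <= M).
  { induction k; intros s0 Hk.
    - exists (Rabs (h s0)). split; [apply Rabs_pos|].
      intros x Hx. inversion Hx; subst; [lra|].
      apply In_pairs in H. lia.
    - destruct (bounded_list h s0 (pairs (nlin s0))) as [M [HM HMp]].
      { intros p Hp. apply IHk. rewrite nlin_merge by auto. lia. }
      exists (Rmax (Rabs (h s0)) M). split; [eapply Rle_trans; [apply Rabs_pos| apply Rmax_l]|].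
      intros x Hx. inversion Hx; subst; [apply Rmax_l|].
      eapply Rle_trans; [eapply HMp; eauto| apply Rmax_r]. }
  apply (H (nlin s) s). lia.
Qed.

Lemma Qn_bound h s M : 0 <= M -> (forall x, Reach s x -> Rabs (h x) <= M) ->
  forall m x, Reach s x -> Rabs (Qn m h x) <= (2 * lam s) ^ m * M.
Proof.
  intros HM Hh m. induction m; intros x Hx.
  - simpl. rewrite Rmult_1_l. auto.
  - change (Qn (S m) h x) with (Qop (Qn m h) x). unfold Qop.
    set (B := (2 * lam s) ^ m * M).
    assert (HB0 : 0 <= B) by (unfold B; apply Rmult_le_pos; auto; apply pow_le;
                              pose proof (lam_nonneg s); lra).
    pose proof (IHm x Hx) as H1.
    assert (H2 : Rabs (sumL (pairs (nlin x)) (fun p => Qn m h (merge x p))) <= lam x * B).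
    { unfold lam. apply sumL_abs. intros p Hp. apply IHm. apply Reach_step; auto. }
    pose proof (lam_Reach s x Hx). pose proof (lam_nonneg x).
    eapply Rle_trans; [apply Rabs_triang|].
    rewrite Rabs_mult, Rabs_Ropp, (Rabs_right (lam x)) by lra.
    assert (lam x * Rabs (Qn m h x) <= lam s * B) by (apply Rmult_le_compat; auto; apply Rabs_pos).
    assert (lam x * B <= lam s * B) by (apply Rmult_le_compat_r; auto).
    replace ((2 * lam s) ^ S m * M) with (2 * (lam s * B)) by (unfold B; simpl; ring).
    lra.
Qed.

Lemma Un_cv_const c : Un_cv (fun _ => c) c.
Proof. intros eps He. exists 0%nat. intros. unfold Rdist. rewrite Rminus_diag, Rabs_R0. lra. Qed.

Lemma Un_cv_lin u v l1 l2 a b : Un_cv u l1 -> Un_cv v l2 ->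
  Un_cv (fun N => a * u N + b * v N) (a * l1 + b * l2).
Proof.
  intros H1 H2. apply CV_plus.
  - apply (CV_mult (fun _ => a) u a l1); auto. apply Un_cv_const.
  - apply (CV_mult (fun _ => b) v b l2); auto. apply Un_cv_const.
Qed.

Lemma series_cv_of_ex (a : nat -> R) : ex_series a -> exists l, Un_cv (sum_f_R0 a) l.
Proof.
  intros [l Hl]. exists l. apply is_series_Reals in Hl. exact Hl.
Qed.

Lemma exp_series_ex (x M : R) : ex_series (fun k => / INR (fact k) * x ^ k * M).
Proof.
  exists (exp x * M). apply is_series_Reals. unfold infinite_sum.
  assert (Un_cv (fun N => sum_f_R0 (fun k => / INR (fact k) * x ^ k * M) N) (exp x * M)).
  { eapply Un_cv_ext.
    2: apply (CV_mult (E1 x) (fun _ => M) (exp x) M); [apply E1_cvg| apply Un_cv_const].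
    intro N. simpl. unfold E1. rewrite <- scal_sum. ring. }
  exact H.
Qed.

Lemma psum_cv t h s : exists l, Un_cv (psum t h s) l.
Proof.
  destruct (Reach_bounded h s) as [M [HM Hh]].
  apply series_cv_of_ex.
  apply (@ex_series_le R_AbsRing R_CompleteNormedModule _ (fun k => / INR (fact k) * (2 * lam s * Rabs t) ^ k * M)).
  - intro m. change (norm (t ^ m / INR (fact m) * Qn m h s)) with (Rabs (t ^ m / INR (fact m) * Qn m h s)).
    pose proof (Qn_bound h s M HM Hh m s (Reach0 s)).
    unfold Rdiv. rewrite !Rabs_mult, Rabs_inv, <- RPow_abs.
    rewrite (Rabs_right (INR (fact m))) by (apply Rle_ge, pos_INR).
    rewrite Rpow_mult_distr.
    pose proof (Rabs_pos t). pose proof (INR_fact_lt_0 m).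
    assert (0 <= / INR (fact m)) by (left; apply Rinv_0_lt_compat; auto).
    assert (0 <= Rabs t ^ m) by (apply pow_le; auto).
    replace (/ INR (fact m) * ((2 * lam s) ^ m * Rabs t ^ m) * M)
      with (Rabs t ^ m * / INR (fact m) * ((2 * lam s) ^ m * M)) by ring.
    apply Rmult_le_compat_l; auto. apply Rmult_le_pos; auto.
  - apply exp_series_ex.
Qed.

Lemma semigroup_cv t h s : Un_cv (psum t h s) (semigroup t h s).
Proof.
  destruct (psum_cv t h s) as [l Hl]. rewrite semigroup_eq, (Rlim_spec _ l Hl). exact Hl.
Qed.

Lemma psum_lin t a b h1 h2 s N :
  psum t (fun x => a * h1 x + b * h2 x) s N = a * psum t h1 s N + b * psum t h2 s N.
Proof.
  unfold psum. induction N; cbn [sum_f_R0]; rewrite Qn_lin; [ring|]. rewrite IHN. ring.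
Qed.

Lemma semigroup_lin t a b h1 h2 s :
  semigroup t (fun x => a * h1 x + b * h2 x) s = a * semigroup t h1 s + b * semigroup t h2 s.
Proof.
  rewrite semigroup_eq. apply Rlim_spec.
  eapply Un_cv_ext; [intro N; symmetry; apply psum_lin|].
  apply Un_cv_lin; apply semigroup_cv.
Qed.

Fixpoint bin (n k : nat) : R :=
  match n, k with
  | _, O => 1
  | O, S _ => 0
  | S n', S k' => bin n' k' + bin n' (S k')
  end.

Lemma bin_big n : forall k, (n < k)%nat -> bin n k = 0.
Proof.
  induction n; intros k Hk; destruct k; try lia; simpl; auto.
  rewrite !IHn by lia. ring.
Qed.

Lemma bin_fact n : forall k, (k <= n)%nat ->
  bin n k * INR (fact k) * INR (fact (n - k)) = INR (fact n).
Proof.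
  induction n; intros k Hk.
  - destruct k; [simpl; ring| lia].
  - destruct k.
    + simpl bin. rewrite Nat.sub_0_r. simpl fact at 1. simpl INR at 1. ring.
    + simpl bin. replace (S n - S k)%nat with (n - k)%nat by lia.
      destruct (Nat.eq_dec k n) as [->|Hne].
      * rewrite (bin_big n (S n)) by lia. rewrite Nat.sub_diag.
        pose proof (IHn n (le_n n)) as H. rewrite Nat.sub_diag in H.
        assert (Hb : bin n n = 1).
        { apply (Rmult_eq_reg_r (INR (fact n))); [| apply INR_fact_neq_0]. simpl in H. lra. }
        rewrite Hb. simpl (fact 0). simpl INR at 2. ring.
      * pose proof (IHn k ltac:(lia)) as H1. pose proof (IHn (S k) ltac:(lia)) as H2.
        replace (n - k)%nat with (S (n - S k)) by lia.
        replace (n - k)%nat with (S (n - S k)) in H1 by lia.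
        change (fact (S k)) with ((S k) * fact k)%nat in *.
        change (fact (S n)) with ((S n) * fact n)%nat.
        change (fact (S (n - S k))) with ((S (n - S k)) * fact (n - S k))%nat in *.
        rewrite !mult_INR in *. rewrite !S_INR in *.
        rewrite minus_INR in * by lia.
        replace ((bin n k + bin n (S k)) * ((INR k + 1) * INR (fact k)) *
                 ((INR n - INR (S k) + 1) * INR (fact (n - S k))))
          with ((INR k + 1) * (bin n k * INR (fact k) * ((INR n - INR (S k) + 1) * INR (fact (n - S k))))
                + (INR n - INR (S k) + 1) * (bin n (S k) * ((INR k + 1) * INR (fact k)) * INR (fact (n - S k))))
          by ring.
        rewrite H1, H2. rewrite S_INR. ring.
Qed.

Lemma sum_shift f n : sum_f_R0 (fun k => f (S k)) n = sum_f_R0 f (S n) - f 0%nat.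
Proof. rewrite (decomp_sum f (S n)) by lia. simpl pred. ring. Qed.

Lemma binom_step (a : R) (P : nat -> R) n :
  sum_f_R0 (fun k => bin n k * a ^ k * (P (S (n - k)%nat) + a * P (n - k)%nat)) n =
  sum_f_R0 (fun k => bin (S n) k * a ^ k * P (S n - k)%nat) (S n).
Proof.
  rewrite (decomp_sum (fun k => bin (S n) k * a ^ k * P (S n - k)%nat) (S n)) by lia.
  simpl pred.
  replace (sum_f_R0 (fun i => bin (S n) (S i) * a ^ S i * P (S n - S i)%nat) n)
    with (sum_f_R0 (fun k => bin n k * a ^ S k * P (n - k)%nat) n
          + sum_f_R0 (fun k => bin n (S k) * a ^ S k * P (n - k)%nat) n)
    by (rewrite <- plus_sum; apply sum_eq; intros; simpl; ring).
  set (f := fun k => bin n k * a ^ k * P (S n - k)%nat).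
  assert (E1 : sum_f_R0 (fun k => bin n (S k) * a ^ S k * P (n - k)%nat) n
               = sum_f_R0 (fun k => f (S k)) n) by (apply sum_eq; intros; unfold f; simpl; ring).
  rewrite E1, sum_shift, tech5.
  assert (E2 : f (S n) = 0) by (unfold f; rewrite bin_big by lia; ring).
  assert (E3 : sum_f_R0 f n = sum_f_R0 (fun k => bin n k * a ^ k * P (S (n - k)%nat)) n).
  { apply sum_eq; intros. unfold f. replace (S n - i)%nat with (S (n - i)) by lia. reflexivity. }
  rewrite E2, E3.
  replace (sum_f_R0 (fun k => bin n k * a ^ k * (P (S (n - k)%nat) + a * P (n - k)%nat)) n)
    with (sum_f_R0 (fun k => bin n k * a ^ k * P (S (n - k)%nat)) n
          + sum_f_R0 (fun k => bin n k * a ^ S k * P (n - k)%nat) n)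
    by (rewrite <- plus_sum; apply sum_eq; intros; simpl; ring).
  unfold f. simpl. replace (bin n 0) with 1 by (destruct n; reflexivity). ring.
Qed.

Definition Pop (c : R) (F : state -> R) (x : state) : R := Qop F x + c * F x.
Definition Pn (c : R) (j : nat) (h : state -> R) : state -> R := Nat.iter j (Pop c) h.

Lemma Qop_ext F1 F2 y : (forall x, F1 x = F2 x) -> Qop F1 y = Qop F2 y.
Proof. intro H. replace F1 with F2; [reflexivity|]. apply functional_extensionality; auto. Qed.

Lemma sumL_add {A} (l : list A) g1 g2 : sumL l (fun p => g1 p + g2 p) = sumL l g1 + sumL l g2.
Proof. induction l; simpl; [ring|]. rewrite IHl. ring. Qed.

Lemma sumL_scal {A} (l : list A) a g : sumL l (fun p => a * g p) = a * sumL l g.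
Proof. induction l; simpl; [ring|]. rewrite IHl. ring. Qed.

Lemma Qop_add F1 F2 y : Qop (fun x => F1 x + F2 x) y = Qop F1 y + Qop F2 y.
Proof. unfold Qop. rewrite sumL_add. ring. Qed.

Lemma Qop_scal a F y : Qop (fun x => a * F x) y = a * Qop F y.
Proof. unfold Qop. rewrite sumL_scal. ring. Qed.

Lemma Qop_sum (al : nat -> R) (F : nat -> state -> R) n y :
  Qop (fun x => sum_f_R0 (fun k => al k * F k x) n) y = sum_f_R0 (fun k => al k * Qop (F k) y) n.
Proof.
  induction n.
  - simpl. apply Qop_scal.
  - simpl. rewrite Qop_add, Qop_scal, IHn. reflexivity.
Qed.

Lemma Qn_binom c h : forall n x,
  Qn n h x = sum_f_R0 (fun k => bin n k * (- c) ^ k * Pn c (n - k) h x) n.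
Proof.
  induction n; intro x.
  - simpl. ring.
  - change (Qn (S n) h x) with (Qop (Qn n h) x).
    rewrite (Qop_ext _ (fun x => sum_f_R0 (fun k => (bin n k * (- c) ^ k) * Pn c (n - k) h x) n))
      by (intro; rewrite IHn; reflexivity).
    rewrite Qop_sum.
    rewrite <- (binom_step (- c) (fun j => Pn c j h x) n).
    apply sum_eq. intros k Hk.
    assert (Qop (Pn c (n - k) h) x = Pn c (S (n - k)) h x + - c * Pn c (n - k) h x).
    { change (Pn c (S (n - k)) h x) with (Pop c (Pn c (n - k) h) x). unfold Pop. ring. }
    change (fun x0 : state => Pn c (n - k) h x0) with (Pn c (n - k) h). rewrite H. ring.
Qed.

Lemma Un_cv_nonneg u l : (forall n, 0 <= u n) -> Un_cv u l -> 0 <= l.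
Proof.
  intros H Hc. destruct (Rle_or_lt 0 l) as [|Hl]; auto.
  destruct (Hc (- l)) as [N HN]; [lra|].
  specialize (HN N (le_n N)). unfold Rdist in HN. pose proof (H N).
  apply Rabs_def2 in HN. lra.
Qed.

Lemma sum_nonneg (a : nat -> R) N : (forall n, 0 <= a n) -> 0 <= sum_f_R0 a N.
Proof. intro H. induction N; simpl; auto. pose proof (H (S N)). lra. Qed.

Lemma semigroup_pos t h s : 0 <= t -> (forall x, Reach s x -> 0 <= h x) -> 0 <= semigroup t h s.
Proof.
  intros Ht Hh.
  set (c := lam s).
  assert (Hc : 0 <= c) by apply lam_nonneg.
  destruct (Reach_bounded h s) as [M [HM HMb]].
  assert (Pnn : forall j x, Reach s x -> 0 <= Pn c j h x).
  { induction j; intros x Hx; [simpl; auto|].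
    change (Pn c (S j) h x) with (Pop c (Pn c j h) x). unfold Pop, Qop.
    pose proof (lam_Reach s x Hx). pose proof (IHj x Hx).
    assert (0 <= sumL (pairs (nlin x)) (fun p => Pn c j h (merge x p))).
    { apply sumL_nonneg. intros p Hp. apply IHj. apply Reach_step; auto. }
    assert (0 <= (c - lam x) * Pn c j h x) by (apply Rmult_le_pos; unfold c in *; lra).
    lra. }
  assert (Pnle : forall j x, Reach s x -> Pn c j h x <= c ^ j * M).
  { induction j; intros x Hx.
    - simpl. pose proof (HMb x Hx). pose proof (Rle_abs (h x)). lra.
    - change (Pn c (S j) h x) with (Pop c (Pn c j h) x). unfold Pop, Qop.
      pose proof (lam_Reach s x Hx). pose proof (lam_nonneg x). pose proof (IHj x Hx).
      assert (sumL (pairs (nlin x)) (fun p => Pn c j h (merge x p)) <= lam x * (c ^ j * M)).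
      { unfold lam. apply sumL_le. intros p Hp. apply IHj. apply Reach_step; auto. }
      assert ((c - lam x) * Pn c j h x <= (c - lam x) * (c ^ j * M))
        by (apply Rmult_le_compat_l; unfold c in *; lra).
      simpl. lra. }
  set (Bs := fun j => t ^ j / INR (fact j) * Pn c j h s).
  assert (HBs0 : forall j, 0 <= Bs j).
  { intro j. unfold Bs. apply Rmult_le_pos; [| apply Pnn, Reach0].
    unfold Rdiv. apply Rmult_le_pos; [apply pow_le; auto|].
    left. apply Rinv_0_lt_compat. apply INR_fact_lt_0. }
  assert (HBex : ex_series Bs).
  { apply (@ex_series_le R_AbsRing R_CompleteNormedModule _ (fun k => / INR (fact k) * (c * t) ^ k * M)).
    - intro j. change (norm (Bs j)) with (Rabs (Bs j)). rewrite Rabs_right by (apply Rle_ge; auto).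
      unfold Bs. rewrite Rpow_mult_distr.
      pose proof (Pnle j s (Reach0 s)).
      assert (0 <= / INR (fact j)) by (left; apply Rinv_0_lt_compat; apply INR_fact_lt_0).
      assert (0 <= t ^ j) by (apply pow_le; auto).
      replace (/ INR (fact j) * (c ^ j * t ^ j) * M) with (t ^ j * / INR (fact j) * (c ^ j * M)) by ring.
      unfold Rdiv. apply Rmult_le_compat_l; auto. apply Rmult_le_pos; auto.
    - apply exp_series_ex. }
  destruct HBex as [LB HLB].
  assert (HLB0 : 0 <= LB).
  { apply is_series_Reals in HLB. eapply Un_cv_nonneg; [| exact HLB].
    intro N. apply sum_nonneg. auto. }
  set (Aa := fun k => (- c * t) ^ k / INR (fact k)).
  assert (HA : is_series Aa (exp (- c * t))).
  { apply is_series_Reals. unfold infinite_sum.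
    eapply Un_cv_ext; [| apply E1_cvg]. intro N. unfold E1. apply sum_eq; intros.
    unfold Aa. unfold Rdiv. ring. }
  assert (HAabs : ex_series (fun n => Rabs (Aa n))).
  { eapply ex_series_ext; [| apply (exp_series_ex (c * t) 1)].
    intro n. unfold Aa. unfold Rdiv. rewrite Rabs_mult, Rabs_inv, <- RPow_abs.
    rewrite (Rabs_right (INR (fact n))) by (apply Rle_ge, pos_INR).
    replace (Rabs (- c * t)) with (c * t) by (rewrite Rabs_left1; [ring| nra] || (rewrite Rabs_left1; [nra|ring])). rewrite Rmult_1_r; apply Rmult_comm. }
  assert (HBabs : ex_series (fun n => Rabs (Bs n))).
  { eapply ex_series_ext; [| exists LB; exact HLB].
    intro n. rewrite Rabs_right; auto. apply Rle_ge; auto. }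
  pose proof (is_series_mult Aa Bs _ _ HA HLB HAabs HBabs) as Hm.
  assert (Heq : forall n, sum_f_R0 (fun k => Aa k * Bs (n - k)%nat) n = t ^ n / INR (fact n) * Qn n h s).
  { intro n. rewrite (Qn_binom c h n s). rewrite scal_sum. apply sum_eq. intros k Hk.
    unfold Aa, Bs.
    pose proof (bin_fact n k Hk) as Hb.
    pose proof (INR_fact_neq_0 k). pose proof (INR_fact_neq_0 (n - k)). pose proof (INR_fact_neq_0 n).
    replace (bin n k) with (INR (fact n) / (INR (fact k) * INR (fact (n - k)))).
    2:{ rewrite <- Hb. field. auto. }
    replace (t ^ n) with (t ^ k * t ^ (n - k)).
    2:{ rewrite <- pow_add. f_equal. lia. }
    rewrite Rpow_mult_distr. field. auto. }
  apply (is_series_ext _ _ _ Heq) in Hm.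
  apply is_series_Reals in Hm.
  rewrite semigroup_eq. rewrite (Rlim_spec _ (exp (- c * t) * LB)).
  - apply Rmult_le_pos; auto. left; apply exp_pos.
  - exact Hm.
Qed.

Fixpoint harmF (k : nat) (h : state -> R) (s : state) : R :=
  match k with
  | O => h s
  | S k' => if Nat.leb (nlin s) 1 then h s
            else / lam s * sumL (pairs (nlin s)) (fun p => harmF k' h (merge s p))
  end.

Definition harm (h : state -> R) (s : state) : R := harmF (nlin s) h s.

Lemma harm_low h s : (nlin s <= 1)%nat -> harm h s = h s.
Proof.
  unfold harm. destruct (nlin s) as [|[|k]] eqn:E; intro H; try lia; simpl; auto.
  rewrite E. reflexivity.
Qed.

Lemma harm_high h s : (2 <= nlin s)%nat ->
  harm h s = / lam s * sumL (pairs (nlin s)) (fun p => harm h (merge s p)).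
Proof.
  intro H. unfold harm at 1. destruct (nlin s) as [|k] eqn:E; [lia|].
  simpl. rewrite E. replace (Nat.leb (S k) 1) with false by (symmetry; apply Nat.leb_gt; lia).
  f_equal. apply sumL_ext_in. intros p Hp. unfold harm. rewrite nlin_merge by (rewrite E; auto).
  rewrite E. simpl. rewrite Nat.sub_0_r. reflexivity.
Qed.

Lemma pairs_low k : (k <= 1)%nat -> pairs k = [].
Proof. intro H. destruct k as [|[|]]; [reflexivity|reflexivity|lia]. Qed.

Lemma lam_pos s : (2 <= nlin s)%nat -> 0 < lam s.
Proof.
  intro H. unfold lam. pose proof (length_pairs (nlin s)).
  apply lt_0_INR. assert (1 <= nlin s - 1)%nat by lia.
  assert (2 <= nlin s * (nlin s - 1))%nat by nia. lia.
Qed.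

Lemma Qop_harm h s : Qop (harm h) s = 0.
Proof.
  destruct (Nat.le_gt_cases (nlin s) 1) as [H|H].
  - unfold Qop, lam. rewrite pairs_low by auto. simpl. ring.
  - unfold Qop. rewrite (harm_high h s) by lia. pose proof (lam_pos s ltac:(lia)).
    field. lra.
Qed.

Lemma Qn_harmonic F : (forall x, Qop F x = 0) -> forall m, Qn (S m) F = fun _ => 0.
Proof.
  intros HF m. induction m.
  - apply functional_extensionality; intro x. apply HF.
  - unfold Qn in *. simpl in *. rewrite IHm. apply functional_extensionality; intro x.
    apply Qop_const.
Qed.

Lemma semigroup_harmonic t F s : (forall x, Qop F x = 0) -> semigroup t F s = F s.
Proof.
  intro HF. rewrite semigroup_eq. apply Rlim_spec.
  assert (forall N, psum t F s N = F s).
  { induction N; unfold psum in *; [simpl; field|].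
    rewrite tech5, IHN, Qn_harmonic by auto. ring. }
  eapply Un_cv_ext; [intro N; symmetry; apply H| apply Un_cv_const].
Qed.

Definition psiv (k : nat) : R := if Nat.leb k 1 then 0 else 3 * (INR k - 1) / (INR k + 1).
Definition psi (x : state) : R := psiv (nlin x).

Lemma lam_formula s : lam s = INR (nlin s) * (INR (nlin s) - 1) / 2.
Proof.
  unfold lam. pose proof (length_pairs (nlin s)) as H.
  destruct (nlin s) as [|k]. { simpl. field. }
  apply (f_equal INR) in H. rewrite !mult_INR in H.
  replace (S k - 1)%nat with k in H by lia. rewrite S_INR.
  replace (INR k + 1 - 1) with (INR k) by ring.
  rewrite (S_INR k) in H. replace (INR 2) with 2 in H by (simpl; ring). lra.
Qed.

Lemma Qop_psi x : Qop psi x = - psi x.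
Proof.
  destruct (Nat.le_gt_cases (nlin x) 1) as [H|H].
  - unfold Qop, lam, psi, psiv. rewrite pairs_low by auto.
    replace (Nat.leb (nlin x) 1) with true by (symmetry; apply Nat.leb_le; auto). simpl. ring.
  - unfold Qop. 
    rewrite (sumL_ext_in _ _ (fun _ => psiv (nlin x - 1))).
    2:{ intros p Hp. unfold psi. rewrite nlin_merge; auto. }
    rewrite sumL_const. fold (lam x). rewrite lam_formula. unfold psi, psiv.
    replace (Nat.leb (nlin x) 1) with false by (symmetry; apply Nat.leb_gt; auto).
    destruct (Nat.eq_dec (nlin x) 2) as [E|E].
    + rewrite E. simpl. field.
    + replace (Nat.leb (nlin x - 1) 1) with false by (symmetry; apply Nat.leb_gt; lia).
      rewrite minus_INR by lia. simpl (INR 1).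
      assert (2 < INR (nlin x)). { replace 2 with (INR 2) by (simpl; ring). apply lt_INR. lia. }
      field. lra.
Qed.

Lemma Qn_psi m : Qn m psi = fun x => (-1) ^ m * psi x.
Proof.
  induction m.
  - apply functional_extensionality; intro x. simpl. ring.
  - unfold Qn in *. simpl. rewrite IHm. apply functional_extensionality; intro x.
    rewrite Qop_scal, Qop_psi. ring.
Qed.

Lemma semigroup_psi t s : semigroup t psi s = exp (- t) * psi s.
Proof.
  rewrite semigroup_eq. apply Rlim_spec.
  eapply Un_cv_ext.
  2: apply (CV_mult (E1 (- t)) (fun _ => psi s) (exp (- t)) (psi s)); [apply E1_cvg| apply Un_cv_const].
  intro N. unfold psum, E1. simpl.
  rewrite (Rmult_comm _ (psi s)), scal_sum. apply sum_eq. intros. rewrite Qn_psi.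
  replace ((- t) ^ i) with ((-1) ^ i * t ^ i) by (rewrite <- Rpow_mult_distr; f_equal; ring).
  unfold Rdiv. ring.
Qed.

Lemma psi_nonneg x : 0 <= psi x.
Proof.
  unfold psi, psiv. destruct (Nat.leb (nlin x) 1) eqn:E; [lra|].
  apply Nat.leb_gt in E. assert (1 < INR (nlin x)) by (replace 1 with (INR 1) by reflexivity; apply lt_INR; auto).
  unfold Rdiv. apply Rmult_le_pos; [lra| left; apply Rinv_0_lt_compat; lra].
Qed.

Lemma psi_ge1 x : (2 <= nlin x)%nat -> 1 <= psi x.
Proof.
  intro H. unfold psi, psiv. replace (Nat.leb (nlin x) 1) with false by (symmetry; apply Nat.leb_gt; lia).
  assert (2 <= INR (nlin x)) by (replace 2 with (INR 2) by (simpl; ring); apply le_INR; auto).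
  apply (Rmult_le_reg_r (INR (nlin x) + 1)); [lra|]. unfold Rdiv. rewrite Rmult_assoc, Rinv_l by lra. lra.
Qed.

Lemma semigroup_ext t h1 h2 s : (forall x, h1 x = h2 x) -> semigroup t h1 s = semigroup t h2 s.
Proof. intro H. replace h1 with h2; [reflexivity|]. apply functional_extensionality; auto. Qed.

Lemma semigroup_inf_harm h s : semigroup_inf h s = harm h s.
Proof.
  unfold semigroup_inf. apply Rlim_spec.
  intros eps He.
  assert (HK : exists K, 0 <= K /\ forall N, Rabs (semigroup (INR N) h s - harm h s) <= K * exp (- INR N)).
  {
    set (r := fun x => h x - harm h x).
    destruct (Reach_bounded r s) as [M [HM HMb]].
    exists (M * psi s). split; [apply Rmult_le_pos; auto; apply psi_nonneg|].
    intro N. pose proof (pos_INR N) as Ht. set (t := INR N) in *.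
    assert (E : semigroup t h s = harm h s + semigroup t r s).
    { rewrite <- (semigroup_harmonic t (harm h) s) at 1 by apply Qop_harm.
      rewrite (semigroup_ext t h (fun x => 1 * harm h x + 1 * r x)) by (intro x; unfold r; ring).
      rewrite semigroup_lin. ring. }
    assert (Hr : forall x, Reach s x -> Rabs (r x) <= M * psi x).
    { intros x Hx. destruct (Nat.le_gt_cases (nlin x) 1) as [Hl|Hl].
      - unfold r. rewrite harm_low by auto. rewrite Rminus_diag, Rabs_R0.
        apply Rmult_le_pos; auto; apply psi_nonneg.
      - pose proof (psi_ge1 x ltac:(lia)). pose proof (HMb x Hx).
        assert (M * 1 <= M * psi x) by (apply Rmult_le_compat_l; auto). lra. }
    pose proof (semigroup_pos t (fun x => M * psi x + -1 * r x) s Ht) as P1.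
    pose proof (semigroup_pos t (fun x => M * psi x + 1 * r x) s Ht) as P2.
    rewrite semigroup_lin, semigroup_psi in P1, P2.
    assert (0 <= M * (exp (- t) * psi s) + -1 * semigroup t r s).
    { apply P1. intros x Hx. pose proof (Hr x Hx). pose proof (Rle_abs (r x)). lra. }
    assert (0 <= M * (exp (- t) * psi s) + 1 * semigroup t r s).
    { apply P2. intros x Hx. pose proof (Hr x Hx). pose proof (Rle_abs (- r x)). rewrite Rabs_Ropp in *. lra. }
    rewrite E. replace (harm h s + semigroup t r s - harm h s) with (semigroup t r s) by ring.
    apply Rabs_le. lra. }
  destruct HK as [K [HK0 HK]].
  destruct (INR_unbounded (K / eps)) as [N0 HN0].
  exists N0. intros N HN. unfold Rdist.
  eapply Rle_lt_trans; [apply HK|].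
  assert (HNN : INR N0 <= INR N) by (apply le_INR; lia).
  assert (exp (INR N) > INR N).
  { destruct (Nat.eq_dec N 0) as [->|]. { simpl. rewrite exp_0. lra. }
    pose proof (exp_ineq1 (INR N)). assert (INR N <> 0) by (apply not_0_INR; auto).
    specialize (H H0). lra. }
  rewrite exp_Ropp.
  assert (0 < INR N).
  { destruct (Nat.eq_dec N 0) as [->|Hn].
    - simpl in *. assert (K / eps < 0) by lra.
      assert (0 <= K / eps) by (unfold Rdiv; apply Rmult_le_pos; auto; left; apply Rinv_0_lt_compat; lra). lra.
    - apply lt_0_INR. lia. }
  assert (K < eps * INR N).
  { assert (K / eps < INR N) by lra. apply (Rmult_lt_compat_l eps) in H1; auto.
    unfold Rdiv in H1. replace (eps * (K * / eps)) with K in H1 by (field; lra). lra. }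
  assert (0 < exp (INR N)) by apply exp_pos.
  apply (Rmult_lt_reg_r (exp (INR N))); auto.
  rewrite Rmult_assoc, Rinv_l by lra. rewrite Rmult_1_r.
  assert (eps * INR N < eps * exp (INR N)) by (apply Rmult_lt_compat_l; lra). lra.
Qed.

Lemma harmF_lin k : forall a b h1 h2 s,
  harmF k (fun x => a * h1 x + b * h2 x) s = a * harmF k h1 s + b * harmF k h2 s.
Proof.
  induction k; intros; simpl; auto.
  destruct (Nat.leb (nlin s) 1); auto.
  rewrite (sumL_ext_in _ _ (fun p => a * harmF k h1 (merge s p) + b * harmF k h2 (merge s p)))
    by (intros; apply IHk).
  rewrite sumL_lin. ring.
Qed.

Lemma harm_lin a b h1 h2 s :
  harm (fun x => a * h1 x + b * h2 x) s = a * harm h1 s + b * harm h2 s.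
Proof. apply harmF_lin. Qed.

Lemma harmF_nonneg k : forall h s, (forall x, 0 <= h x) -> 0 <= harmF k h s.
Proof.
  induction k; intros; simpl; auto.
  destruct (Nat.leb (nlin s) 1); auto.
  apply Rmult_le_pos.
  - unfold lam. destruct (length (pairs (nlin s))). { simpl. rewrite Rinv_0. lra. }
    left. apply Rinv_0_lt_compat. apply lt_0_INR. lia.
  - apply sumL_nonneg. intros. auto.
Qed.

Lemma run_stage_eq l d h s :
  run_stage (l, d) h s =
  match d with
  | Some t => semigroup t (fun u => h (close_pop u)) (open_pop l s)
  | None => harm (fun u => h (close_pop u)) (open_pop l s)
  end.
Proof. destruct d; simpl; auto. apply semigroup_inf_harm. Qed.

Lemma run_stage_lin st a b h1 h2 s :
  run_stage st (fun x => a * h1 x + b * h2 x) s = a * run_stage st h1 s + b * run_stage st h2 s.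
Proof.
  destruct st as [l d]. rewrite !run_stage_eq. destruct d.
  - apply semigroup_lin.
  - apply harm_lin.
Qed.

Lemma run_stage_ext st h1 h2 s : (forall x, h1 x = h2 x) -> run_stage st h1 s = run_stage st h2 s.
Proof. intro H. replace h1 with h2; auto. apply functional_extensionality; auto. Qed.

Lemma run_lin sts : forall a b h1 h2 s,
  run sts (fun x => a * h1 x + b * h2 x) s = a * run sts h1 s + b * run sts h2 s.
Proof.
  induction sts as [|st sts IH]; intros; cbn [run]; auto.
  rewrite (run_stage_ext st _ (fun x => a * run sts h1 x + b * run sts h2 x)) by (intro; apply IH).
  apply run_stage_lin.
Qed.

Lemma run_ext sts h1 h2 s : (forall x, h1 x = h2 x) -> run sts h1 s = run sts h2 s.
Proof. intro H. replace h1 with h2; auto. apply functional_extensionality; auto. Qed.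

Lemma run_const sts c s : run sts (fun _ => c) s = c.
Proof.
  revert s. induction sts as [|[l d] sts IH]; intro s; cbn [run]; auto.
  rewrite (run_stage_ext _ _ (fun _ => c)) by (intro; apply IH).
  rewrite run_stage_eq. destruct d.
  - apply semigroup_const.
  - rewrite <- semigroup_inf_harm. apply semigroup_inf_const.
Qed.

Definition dur_ok (st : stage) : Prop :=
  match snd st with Some t => 0 <= t | None => True end.

Lemma run_pos sts : (forall st, In st sts -> dur_ok st) ->
  forall h, (forall x, 0 <= h x) -> forall s, 0 <= run sts h s.
Proof.
  induction sts as [|[l d] sts IH]; intros Hd h Hh s; cbn [run]; auto.
  rewrite run_stage_eq.
  assert (Hr : forall x, 0 <= run sts h x) by (intro; apply IH; auto; intros; apply Hd; right; auto).
  destruct d.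
  - apply semigroup_pos. { apply (Hd (l, Some r)); left; auto. } intros; auto.
  - apply harmF_nonneg. auto.
Qed.

Lemma run_app l1 l2 h s : run (l1 ++ l2) h s = run l1 (run l2 h) s.
Proof.
  revert s. induction l1 as [|st l1 IH]; intro s; cbn [run app]; auto.
  apply run_stage_ext. intro; apply IH.
Qed.

Lemma stage_bisim Rmid l l' d h h' x x' :
  bisim Rmid -> Rmid (open_pop l x) (open_pop l' x') ->
  (forall y y', Rmid y y' -> h (close_pop y) = h' (close_pop y')) ->
  run_stage (l, d) h x = run_stage (l', d) h' x'.
Proof.
  intros HB Ho Hc. simpl. destruct d.
  - eapply semigroup_bisim; eauto.
  - eapply semigroup_inf_bisim; eauto.
Qed.

Definition diagR (P : state -> Prop) (x x' : state) : Prop := x = x' /\ P x.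

Lemma bisim_diag (P : state -> Prop) :
  (forall x p, P x -> In p (pairs (nlin x)) -> P (merge x p)) -> bisim (diagR P).
Proof.
  intros H x x' [<- Hx]. split; auto. intros p Hp. split; auto.
Qed.

Lemma stage_inv (Imid : state -> Prop) l d h h' x :
  (forall x p, Imid x -> In p (pairs (nlin x)) -> Imid (merge x p)) ->
  Imid (open_pop l x) ->
  (forall y, Imid y -> h (close_pop y) = h' (close_pop y)) ->
  run_stage (l, d) h x = run_stage (l, d) h' x.
Proof.
  intros HC Ho Hc. apply (stage_bisim (diagR Imid)).
  - apply bisim_diag; auto.
  - split; auto.
  - intros y y' [<- Hy]. auto.
Qed.

Lemma run_inv (I Imid : state -> Prop) sts :
  (forall st x, In st sts -> I x -> Imid (open_pop (fst st) x)) ->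
  (forall x p, Imid x -> In p (pairs (nlin x)) -> Imid (merge x p)) ->
  (forall y, Imid y -> I (close_pop y)) ->
  forall h h', (forall x, I x -> h x = h' x) -> forall x, I x -> run sts h x = run sts h' x.
Proof.
  intros Ho HC Hc. induction sts as [|[l d] sts IH]; intros h h' Hh x Hx; cbn [run]; auto.
  apply stage_inv with Imid; auto.
  - apply (Ho (l, d)); simpl; auto.
  - intros y Hy. apply IH; auto. intros; apply Ho; simpl; auto.
Qed.

Definition sumc (c : list nat) : nat := fold_right Nat.add 0%nat c.

Lemma sumc_app a b : sumc (a ++ b) = (sumc a + sumc b)%nat.
Proof. induction a; simpl; auto. rewrite IHa. lia. Qed.

Lemma incr_head_app c d : c <> [] -> incr_head (c ++ d) = incr_head c ++ d.
Proof. destruct c; [congruence| reflexivity]. Qed.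

Lemma sumc_incr c : c <> [] -> sumc (incr_head c) = S (sumc c).
Proof. destruct c; [congruence| reflexivity]. Qed.

Lemma length_incr c : length (incr_head c) = length c.
Proof. destruct c; reflexivity. Qed.

Lemma incr_head_nonnil c : c <> [] -> incr_head c <> [].
Proof. destruct c; [congruence| discriminate]. Qed.

Lemma nth_rev_cons {A} i (x : A) l d : (i < length l)%nat -> nth i (rev (x :: l)) d = nth i (rev l) d.
Proof. intro H. simpl. rewrite app_nth1; auto. rewrite length_rev. auto. Qed.

Lemma nth_rev_incr i c d : (S i < length c)%nat -> nth i (rev (incr_head c)) d = nth i (rev c) d.
Proof.
  destruct c as [|x r]; simpl; intro H; [lia|].
  rewrite !app_nth1; auto; rewrite length_rev; lia.
Qed.

Lemma nth_rev_app {A} i (l1 l2 : list A) d : (length l2 <= i)%nat ->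
  nth i (rev (l1 ++ l2)) d = nth (i - length l2) (rev l1) d.
Proof. intro H. rewrite rev_app_distr, app_nth2; rewrite length_rev; auto. Qed.

Lemma cnt_app {A} f (l1 l2 : list A) : cnt f (l1 ++ l2) = (cnt f l1 + cnt f l2)%nat.
Proof. unfold cnt. rewrite filter_app, length_app. reflexivity. Qed.

Lemma cnt_zero {A} f (l : list A) : cnt f l = 0%nat -> forall t, In t l -> f t = false.
Proof.
  induction l; simpl; intros H t Ht; [contradiction|].
  rewrite cnt_cons in H. destruct (f a) eqn:E; [lia|].
  destruct Ht as [<-|Ht]; auto.
Qed.

Definition Inv (x : state) : Prop :=
  let '(ls, c, e) := x in
  cnt (mem La) ls = 1%nat /\ (forall t, In t ls -> mem Lb t = false) /\
  (forall t, In t ls -> mem La t = true -> depth La t = sumc c).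

Lemma Inv_close x : Inv x -> Inv (close_pop x).
Proof. destruct x as [[ls c] e]. simpl. auto. Qed.

Lemma Inv_open x l : label_eqb La l = false -> label_eqb Lb l = false -> Inv x -> Inv (open_pop l x).
Proof.
  destruct x as [[ls c] e]. intros Ha Hb. simpl. intros [H1 [H2 H3]].
  split; [| split].
  - rewrite cnt_app, cnt_cons. change (mem La (Leaf l)) with (label_eqb La l). rewrite Ha.
    change (cnt (mem La) []) with 0%nat. lia.
  - intros t Ht. apply in_app_or in Ht. destruct Ht as [Ht|[<-|[]]]; auto.
  - intros t Ht Hm. apply in_app_or in Ht. destruct Ht as [Ht|[<-|[]]]; auto.
    change (label_eqb La l = true) in Hm. congruence.
Qed.

Lemma Inv_merge x p : Inv x -> (let '(_, c, _) := x in c <> []) -> In p (pairs (nlin x)) ->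
  Inv (merge x p).
Proof.
  destruct x as [[ls c] e]; destruct p as [i j]. intros [H1 [H2 H3]] Hc Hp.
  apply In_pairs in Hp. simpl in Hp.
  rewrite merge_eq. cbv beta iota zeta delta [Inv].
  set (ti := nth i ls (Leaf La)). set (tj := nth j ls (Leaf La)).
  assert (Hti : In ti ls) by (apply nth_In; lia).
  assert (Htj : In tj ls) by (apply nth_In; lia).
  pose proof (del2_cnt (mem La) (Leaf La) i j ls ltac:(lia) ltac:(lia)) as Hc2. fold ti tj in Hc2.
  split; [| split].
  - rewrite cnt_app, cnt_cons. change (mem La (Node ti tj)) with (mem La ti || mem La tj).
    change (cnt (mem La) []) with 0%nat.
    destruct (mem La ti), (mem La tj); simpl in *; lia.
  - intros t Ht. apply in_app_or in Ht. destruct Ht as [Ht|[<-|[]]].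
    + apply H2. eapply del2k_In; eauto.
    + simpl. rewrite (H2 ti Hti), (H2 tj Htj). reflexivity.
  - intros t Ht Hm. destruct (mem La ti) eqn:Ei.
    + assert (Ej : mem La tj = false) by (destruct (mem La tj); auto; lia).
      assert (Hz : cnt (mem La) (del2k 0 i j ls) = 0%nat) by lia.
      simpl. rewrite sumc_incr by auto.
      apply in_app_or in Ht. destruct Ht as [Ht|[<-|[]]].
      * rewrite (cnt_zero _ _ Hz t Ht) in Hm. discriminate.
      * simpl. rewrite Ei. f_equal. apply H3; auto.
    + destruct (mem La tj) eqn:Ej.
      * assert (Hz : cnt (mem La) (del2k 0 i j ls) = 0%nat) by lia.
        simpl. rewrite sumc_incr by auto.
        apply in_app_or in Ht. destruct Ht as [Ht|[<-|[]]].
        -- rewrite (cnt_zero _ _ Hz t Ht) in Hm. discriminate.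
        -- simpl. rewrite Ei, Ej. f_equal. apply H3; auto.
      * simpl. apply in_app_or in Ht. destruct Ht as [Ht|[<-|[]]].
        -- apply H3; auto. eapply del2k_In; eauto.
        -- simpl in Hm. rewrite Ei, Ej in Hm. discriminate.
Qed.

Definition st_ls (x : state) : list gtree := let '(ls, _, _) := x in ls.
Definition st_c (x : state) : list nat := let '(_, c, _) := x in c.
Definition st_e (x : state) : list nat := let '(_, _, e) := x in e.

Lemma st_e_open l x : st_e (open_pop l x) = st_e x.
Proof. destruct x as [[ls c] e]; reflexivity. Qed.
Lemma st_e_close x : st_e (close_pop x) = length (st_ls x) :: st_e x.
Proof. destruct x as [[ls c] e]; reflexivity. Qed.
Lemma st_e_merge x p : st_e (merge x p) = st_e x.
Proof. destruct x as [[ls c] e]; destruct p; reflexivity. Qed.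
Lemma st_c_open l x : st_c (open_pop l x) = 0%nat :: st_c x.
Proof. destruct x as [[ls c] e]; reflexivity. Qed.
Lemma st_c_close x : st_c (close_pop x) = st_c x.
Proof. destruct x as [[ls c] e]; reflexivity. Qed.
Lemma st_c_merge x p : st_c (merge x p) = st_c x \/ st_c (merge x p) = incr_head (st_c x).
Proof.
  destruct x as [[ls c] e]; destruct p. rewrite merge_eq. simpl.
  destruct (_ || _); auto.
Qed.

Lemma Fi_eq i x : Fi i x = Nat.eqb (nth (2 * (i - 1) + 1) (rev (st_e x)) 0%nat) 1.
Proof. destruct x as [[ls c] e]; reflexivity. Qed.

Lemma Fi_close i x : (2 * (i - 1) + 1 < length (st_e x))%nat -> Fi i (close_pop x) = Fi i x.
Proof. intro H. rewrite !Fi_eq, st_e_close, nth_rev_cons; auto. Qed.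

Lemma run_zero sts j (h : state -> R) : (1 <= j)%nat ->
  (forall x, (2 * j <= length (st_e x))%nat -> Fi j x = false -> h x = 0) ->
  forall w, (2 * j <= length (st_e w))%nat -> Fi j w = false -> run sts h w = 0.
Proof.
  intros Hj Hh w Hw HF.
  set (P := fun x => (2 * j <= length (st_e x))%nat /\ Fi j x = false).
  rewrite (run_inv P P sts) with (h' := fun _ => 0).
  - apply run_const.
  - intros st x _ [H1 H2]. unfold P. rewrite !Fi_eq, st_e_open in *. auto.
  - intros x p [H1 H2] _. unfold P. rewrite !Fi_eq, st_e_merge in *. auto.
  - intros y [H1 H2]. unfold P. rewrite Fi_close by lia. rewrite st_e_close. simpl. split; auto.
  - intros x [H1 H2]. auto.
  - split; auto.
Qed.

Lemma run_hist sts (Phi : nat -> nat -> nat -> R) w :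
  (2 <= length (st_c w))%nat -> (2 <= length (st_e w))%nat ->
  run sts (fun x => Phi (nth 0 (rev (st_c x)) 0%nat) (nth 1 (rev (st_c x)) 0%nat)
                        (nth 1 (rev (st_e x)) 0%nat)) w =
  Phi (nth 0 (rev (st_c w)) 0%nat) (nth 1 (rev (st_c w)) 0%nat) (nth 1 (rev (st_e w)) 0%nat).
Proof.
  intros Hc He.
  set (phi := fun x => Phi (nth 0 (rev (st_c x)) 0%nat) (nth 1 (rev (st_c x)) 0%nat)
                        (nth 1 (rev (st_e x)) 0%nat)).
  set (I := fun x => (2 <= length (st_c x))%nat /\ (2 <= length (st_e x))%nat /\ phi x = phi w).
  set (Im := fun x => (3 <= length (st_c x))%nat /\ (2 <= length (st_e x))%nat /\ phi x = phi w).
  change (run sts phi w = phi w).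
  rewrite (run_inv I Im sts) with (h' := fun _ => phi w).
  - apply run_const.
  - intros st x _ [H1 [H2 H3]]. unfold Im. rewrite st_c_open, st_e_open. simpl length.
    split; [lia| split; auto]. rewrite <- H3. unfold phi. rewrite st_c_open, st_e_open.
    rewrite !nth_rev_cons by lia. reflexivity.
  - intros x p [H1 [H2 H3]] _. unfold Im. rewrite st_e_merge.
    destruct (st_c_merge x p) as [E|E].
    + rewrite <- H3. unfold phi. rewrite st_e_merge, E. auto.
    + rewrite <- H3. unfold phi. rewrite st_e_merge, E, length_incr.
      rewrite !nth_rev_incr by lia. auto.
  - intros y [H1 [H2 H3]]. unfold I. rewrite st_c_close, st_e_close. simpl length.
    split; [lia| split; [lia|]]. rewrite <- H3. unfold phi. rewrite st_c_close, st_e_close.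
    rewrite nth_rev_cons by lia. reflexivity.
  - intros x [_ [_ H]]. auto.
  - unfold I. auto.
Qed.

Definition RR (cs es : list nat) (lc le : nat) (x x' : state) : Prop :=
  let '(ls, c, e) := x in let '(ls', c', e') := x' in
  map (mem La) ls = map (mem La) ls' /\ c = c' ++ cs /\ e = e' ++ es /\
  length c' = lc /\ length e' = le /\ Inv x.

Lemma RR_bisim cs es lc le : (1 <= lc)%nat -> bisim (RR cs es lc le).
Proof.
  intros Hlc [[ls c] e] [[ls' c'] e'] [Hm [Hc [He [H1 [H2 HI]]]]].
  assert (Hlen : length ls = length ls') by (rewrite <- (length_map (mem La) ls), Hm, length_map; auto).
  split; [simpl; auto|].
  intros [i j] Hp.
  assert (Hc' : c' <> []) by (intro Hn; rewrite Hn in H1; simpl in H1; lia).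
  assert (HI' : Inv (merge (ls, c, e) (i, j))).
  { apply Inv_merge; auto. subst c. destruct c'; [congruence| discriminate]. }
  revert HI'. rewrite !merge_eq. intro HI'.
  assert (Ei : mem La (nth i ls (Leaf La)) = mem La (nth i ls' (Leaf La))).
  { rewrite <- !(map_nth (mem La)). rewrite Hm. reflexivity. }
  assert (Ej : mem La (nth j ls (Leaf La)) = mem La (nth j ls' (Leaf La))).
  { rewrite <- !(map_nth (mem La)). rewrite Hm. reflexivity. }
  cbv beta iota zeta delta [RR].
  assert (Hmap : map (mem La) (del2k 0 i j ls ++ [Node (nth i ls (Leaf La)) (nth j ls (Leaf La))]) =
                 map (mem La) (del2k 0 i j ls' ++ [Node (nth i ls' (Leaf La)) (nth j ls' (Leaf La))])).
  { rewrite !map_app, !del2k_map, Hm. simpl. rewrite Ei, Ej. reflexivity. }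
  rewrite Ei, Ej in *.
  destruct (mem La (nth i ls' (Leaf La)) || mem La (nth j ls' (Leaf La)));
  (split; [| split; [| split; [| split; [| split]]]]); auto.
  - subst c. apply incr_head_app; auto.
  - rewrite length_incr. auto.
Qed.

Lemma RR_open cs es lc le l l' x x' :
  label_eqb La l = false -> label_eqb Lb l = false -> label_eqb La l' = false ->
  RR cs es lc le x x' -> RR cs es (S lc) le (open_pop l x) (open_pop l' x').
Proof.
  intros Ha Hb Ha' Hx.
  pose proof (Inv_open x l Ha Hb) as HI.
  destruct x as [[ls c] e]; destruct x' as [[ls' c'] e'].
  destruct Hx as [Hm [Hc [He [H1 [H2 H3]]]]].
  specialize (HI H3). cbv beta iota zeta delta [RR open_pop] in *.
  split; [| split; [| split; [| split; [| split]]]]; auto.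
  - rewrite !map_app, Hm. cbn [map]. change (mem La (Leaf l)) with (label_eqb La l).
    change (mem La (Leaf l')) with (label_eqb La l'). rewrite Ha, Ha'. reflexivity.
  - subst. reflexivity.
  - simpl. auto.
Qed.

Lemma RR_close cs es lc le x x' :
  RR cs es lc le x x' -> RR cs es lc (S le) (close_pop x) (close_pop x').
Proof.
  destruct x as [[ls c] e]; destruct x' as [[ls' c'] e'].
  intros [Hm [Hc [He [H1 [H2 H3]]]]].
  assert (Hlen : length ls = length ls') by (rewrite <- (length_map (mem La) ls), Hm, length_map; auto).
  pose proof (Inv_close (ls, c, e) H3) as HI.
  cbv beta iota zeta delta [RR close_pop] in *.
  split; [| split; [| split; [| split; [| split]]]]; auto.
  - subst. rewrite Hlen. reflexivity.
  - simpl. auto.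
Qed.

Definition blk (f g : R) (i : nat) : list stage := [(Lx i, Some f); (Ly i, Some g)].

Lemma cat_stages n f g : caterpillar_stages n f g = flat_map (blk f g) (seq 1 (nblocks n)) ++ [(Lb, None)].
Proof. reflexivity. Qed.

Definition s0 : state := ([Leaf La], [], []).

Lemma block_relabel f g j cs es T (G h' : state -> R) :
  Inv ([T], cs, es) -> mem La T = true ->
  (forall z z', RR cs es 2 1 z z' -> G (close_pop z) = h' (close_pop z')) ->
  run (blk f g j) G ([T], cs, es) = run (blk f g 1) h' s0.
Proof.
  intros HI HT HG. unfold blk. cbn [run].
  assert (H0 : RR cs es 0 0 ([T], cs, es) s0).
  { cbv beta iota zeta delta [RR s0]. split; [simpl; rewrite HT; reflexivity|]. split; [reflexivity|]. split; [reflexivity|]. split; [reflexivity|]. split; [reflexivity|]. exact HI. }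
  apply (stage_bisim (RR cs es 1 0)).
  - apply RR_bisim; lia.
  - apply RR_open; auto.
  - intros y y' Hy. apply (stage_bisim (RR cs es 2 1)).
    + apply RR_bisim; lia.
    + apply RR_open; auto. apply RR_close; auto.
    + intros z z' Hz. apply HG. auto.
Qed.

Lemma Fi_RR cs es lc le j w w' : (1 <= j)%nat -> length es = (2 * (j - 1))%nat ->
  RR cs es lc le w w' -> Fi j w = Fi 1 w'.
Proof.
  intros Hj Hes. destruct w as [[ls c] e]; destruct w' as [[ls' c'] e'].
  intros [Hm [Hc [He _]]]. rewrite !Fi_eq. simpl st_e. subst e.
  rewrite nth_rev_app by lia. replace (2 * (j - 1) + 1 - length es)%nat with 1%nat by lia.
  reflexivity.
Qed.

Lemma Xi_RR cs es le w w' : RR cs es 2 le w w' ->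
  INR (sumc (st_c w)) = INR (sumc cs) + Xi 1 w'.
Proof.
  destruct w as [[ls c] e]; destruct w' as [[ls' c'] e'].
  intros [Hm [Hc [He [H1 _]]]]. simpl st_c. subst c.
  destruct c' as [|a [|b [|]]]; simpl in H1; try lia.
  unfold Xi. simpl. rewrite <- plus_INR. f_equal. lia.
Qed.

Lemma Fi_close_len cs es lc j z z' : (1 <= j)%nat -> length es = (2 * (j - 1))%nat ->
  RR cs es lc 1 z z' -> Fi j (close_pop z) = Nat.eqb (length (st_ls z)) 1.
Proof.
  intros Hj Hes. destruct z as [[ls c] e]; destruct z' as [[ls' c'] e'].
  intros [Hm [Hc [He [H1 [H2 _]]]]]. rewrite Fi_eq. simpl st_e. simpl st_ls. subst e.
  destruct e' as [|a [|]]; simpl in H2; try lia.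
  replace (length ls :: [a] ++ es) with ([length ls; a] ++ es) by reflexivity.
  rewrite nth_rev_app by lia. replace (2 * (j - 1) + 1 - length es)%nat with 1%nat by lia.
  reflexivity.
Qed.

Definition Hq (n : nat) (q : R -> R) (x : state) : R := ind (Fall n x) * q (dg_ab x).

Definition Kop (n : nat) (f : R) (Q : R -> R) (X : R) : R :=
  run (blk f (gbranch n) 1) (fun w => ind (Fi 1 w) * Q (X + Xi 1 w)) s0.

Definition Kiter n f k (Q : R -> R) : R -> R := Nat.iter k (Kop n f) Q.

Lemma Fall_true n x : (forall i, (1 <= i <= nblocks n)%nat -> Fi i x = true) -> Fall n x = true.
Proof.
  intro H. unfold Fall. apply forallb_forall. intros i Hi. apply in_seq in Hi. apply H. lia.
Qed.

Lemma Fall_false n x j : (1 <= j <= nblocks n)%nat -> Fi j x = false -> Fall n x = false.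
Proof.
  intros Hj HF. unfold Fall. destruct (forallb _ _) eqn:E; auto.
  rewrite forallb_forall in E. rewrite E in HF; [discriminate|]. apply in_seq. lia.
Qed.

Lemma Fi_prefix i j x y : (1 <= i < j)%nat ->
  (exists pre, st_e y = pre ++ st_e x) -> length (st_e x) = (2 * (j - 1))%nat ->
  Fi i y = Fi i x.
Proof.
  intros Hij [pre Hp] Hl. rewrite !Fi_eq, Hp. rewrite rev_app_distr, app_nth1; auto.
  rewrite length_rev. lia.
Qed.

Lemma base_case n q T cs es :
  mem La T = true -> mem Lb T = false -> depth La T = sumc cs ->
  length es = (2 * nblocks n)%nat ->
  (forall i, (1 <= i <= nblocks n)%nat -> Fi i ([T], cs, es) = true) ->
  run [(Lb, None)] (Hq n q) ([T], cs, es) = q (INR (sumc cs) + 1).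
Proof.
  intros HTa HTb HTd Hes HF. cbn [run]. rewrite run_stage_eq.
  set (F := fun u => Hq n q (close_pop u)).
  simpl open_pop.
  rewrite harm_high by (simpl; lia).
  replace (pairs (nlin ([T; Leaf Lb], 0%nat :: cs, es))) with [(0%nat, 1%nat)] by reflexivity.
  replace (lam ([T; Leaf Lb], 0%nat :: cs, es)) with 1 by reflexivity.
  cbn [sumL fold_right].
  rewrite merge_eq.
  replace (del2k 0 0 1 [T; Leaf Lb]) with (@nil gtree) by reflexivity.
  cbn [nth app]. rewrite HTa. cbn [orb incr_head].
  rewrite harm_low by (simpl; lia).
  unfold F, Hq. simpl close_pop.
  rewrite Fall_true.
  2:{ intros i Hi. rewrite <- (HF i Hi). rewrite !Fi_eq. simpl st_e. rewrite nth_rev_cons; auto. lia. }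
  unfold dg_ab, gene_tree. simpl hd.
  assert (Hu : udist La Lb (Node T (Leaf Lb)) = S (sumc cs)).
  { unfold udist. cbn [mem]. rewrite HTa, HTb. simpl.
    rewrite HTa, HTb. simpl. rewrite HTd. lia. }
  rewrite Hu, S_INR. simpl ind. rewrite Rinv_1. ring.
Qed.

Lemma claim n f : forall k j q T cs es,
  (j + k = nblocks n + 1)%nat -> (1 <= j)%nat ->
  mem La T = true -> mem Lb T = false -> depth La T = sumc cs ->
  length cs = (2 * (j - 1))%nat -> length es = (2 * (j - 1))%nat ->
  (forall i, (1 <= i < j)%nat -> Fi i ([T], cs, es) = true) ->
  run (flat_map (blk f (gbranch n)) (seq j k) ++ [(Lb, None)]) (Hq n q) ([T], cs, es) =
  Kiter n f k (fun x => q (x + 1)) (INR (sumc cs)).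
Proof.
  induction k; intros j q T cs es Hjk Hj HTa HTb HTd Hcs Hes HF.
  - cbn [seq flat_map app]. rewrite base_case; auto.
    + replace (nblocks n) with (j - 1)%nat by lia. auto.
    + intros i Hi. apply HF. lia.
  - cbn [seq flat_map]. rewrite <- app_assoc, run_app.
    set (G := run (flat_map (blk f (gbranch n)) (seq (S j) k) ++ [(Lb, None)]) (Hq n q)).
    change (Kiter n f (S k) (fun x => q (x + 1)) (INR (sumc cs)))
      with (Kop n f (Kiter n f k (fun x => q (x + 1))) (INR (sumc cs))).
    unfold Kop. apply block_relabel; auto.
    { cbv beta iota zeta delta [Inv]. split; [| split].
      - rewrite cnt_cons, HTa. reflexivity.
      - intros t [<-|[]]. auto.
      - intros t [<-|[]] _. auto. }
    intros z z' Hz.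
    pose proof (Fi_close_len cs es 2 j z z' Hj Hes Hz) as Hfi.
    pose proof (Fi_RR cs es 2 2 j (close_pop z) (close_pop z') Hj Hes (RR_close _ _ _ _ _ _ Hz)) as Hf1.
    pose proof (Xi_RR cs es 2 (close_pop z) (close_pop z') (RR_close _ _ _ _ _ _ Hz)) as HX.
    destruct (Nat.eqb (length (st_ls z)) 1) eqn:E.
    + rewrite <- Hf1, Hfi. simpl ind. rewrite Rmult_1_l.
      rewrite <- HX. rewrite st_c_close.
      apply Nat.eqb_eq in E.
      destruct z as [[ls c] e]. destruct z' as [[ls' c'] e'].
      destruct Hz as [Hm [Hc [He [H1 [H2 HI]]]]].
      simpl st_ls in E. destruct ls as [|T' [|]]; simpl in E; try lia.
      destruct HI as [I1 [I2 I3]].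
      assert (HT'a : mem La T' = true).
      { rewrite cnt_cons in I1. destruct (mem La T'); auto. discriminate. }
      unfold G. simpl close_pop. simpl st_c.
      apply (IHk (S j)); auto.
      * lia.
      * apply I2. left; auto.
      * apply I3; auto. left; auto.
      * subst c. rewrite length_app. lia.
      * simpl. subst e. rewrite length_app. lia.
      * intros i Hi. destruct (Nat.eq_dec i j) as [->|Hne].
        -- assert (Hq1 : Fi j (close_pop ([T'], c, e)) = true) by (rewrite Hfi; reflexivity). exact Hq1.
        -- rewrite (Fi_prefix i j ([T], cs, es)).
           ++ apply HF. lia.
           ++ lia.
           ++ simpl. exists (1%nat :: e'). subst e. reflexivity.
           ++ simpl. auto.
    + rewrite <- Hf1, Hfi. simpl ind. rewrite Rmult_0_l.
      unfold G. apply (run_zero _ j); auto.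
      * intros x Hx HFx. unfold Hq. rewrite (Fall_false n x j); [simpl; ring| lia| auto].
      * destruct z as [[ls c] e]. destruct z' as [[ls' c'] e'].
        destruct Hz as [Hm [Hc [He [H1 [H2 HI]]]]]. simpl. subst e. rewrite length_app. lia.
Qed.

Lemma Ecat_Hq n f q : Ecat n f (Hq n q) = Kiter n f (nblocks n) (fun x => q (x + 1)) 0.
Proof.
  unfold Ecat. rewrite cat_stages.
  replace 0 with (INR (sumc [])) by reflexivity.
  apply (claim n f (nblocks n) 1 q (Leaf La) [] []); auto; try lia.
Qed.

Lemma Ecat_lin n f a b h1 h2 :
  Ecat n f (fun x => a * h1 x + b * h2 x) = a * Ecat n f h1 + b * Ecat n f h2.
Proof. apply run_lin. Qed.

Lemma Ecat_ext n f h1 h2 : (forall x, h1 x = h2 x) -> Ecat n f h1 = Ecat n f h2.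
Proof. intro H. apply run_ext. auto. Qed.

Lemma Ecat_const n f c : Ecat n f (fun _ => c) = c.
Proof. apply run_const. Qed.

Lemma gbranch_nonneg n : (1 <= n)%nat -> 0 <= gbranch n.
Proof.
  intro H. unfold gbranch. assert (1 <= INR n) by (replace 1 with (INR 1) by reflexivity; apply le_INR; auto).
  destruct (Req_dec (INR n) 1) as [E|E].
  - rewrite E, ln_1. lra.
  - assert (0 < ln (INR n)). { rewrite <- ln_1. apply ln_increasing; lra. } lra.
Qed.

Lemma Ecat_pos n f h : 0 <= f -> (1 <= n)%nat -> (forall x, 0 <= h x) -> 0 <= Ecat n f h.
Proof.
  intros Hf Hn Hh. unfold Ecat. apply run_pos; auto.
  intros st Hst. rewrite cat_stages in Hst. apply in_app_or in Hst. destruct Hst as [Hst|[<-|[]]].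
  - apply in_flat_map in Hst. destruct Hst as [i [_ Hi]]. unfold blk in Hi.
    destruct Hi as [<-|[<-|[]]]; unfold dur_ok; simpl; auto. apply gbranch_nonneg; auto.
  - unfold dur_ok. simpl. auto.
Qed.

Lemma Ecat_mono n f h1 h2 : 0 <= f -> (1 <= n)%nat -> (forall x, h1 x <= h2 x) -> Ecat n f h1 <= Ecat n f h2.
Proof.
  intros Hf Hn H. pose proof (Ecat_pos n f (fun x => 1 * h2 x + (-1) * h1 x) Hf Hn) as P.
  rewrite Ecat_lin in P. assert (0 <= Ecat n f h2 + - Ecat n f h1); [|lra].
  replace (Ecat n f h2 + - Ecat n f h1) with (1 * Ecat n f h2 + -1 * Ecat n f h1) by ring.
  apply P. intro x. pose proof (H x). lra.
Qed.

Lemma Ecat_hist n f Phi : (1 <= nblocks n)%nat ->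
  Ecat n f (fun x => Phi (nth 0 (rev (st_c x)) 0%nat) (nth 1 (rev (st_c x)) 0%nat)
                         (nth 1 (rev (st_e x)) 0%nat)) =
  run (blk f (gbranch n) 1) (fun x => Phi (nth 0 (rev (st_c x)) 0%nat) (nth 1 (rev (st_c x)) 0%nat)
                         (nth 1 (rev (st_e x)) 0%nat)) s0.
Proof.
  intro Hm. unfold Ecat. rewrite cat_stages.
  destruct (nblocks n) as [|m'] eqn:E; [lia|].
  cbn [seq flat_map]. rewrite <- app_assoc, run_app.
  set (phi := fun x => Phi (nth 0 (rev (st_c x)) 0%nat) (nth 1 (rev (st_c x)) 0%nat)
                         (nth 1 (rev (st_e x)) 0%nat)).
  set (REST := flat_map (blk f (gbranch n)) (seq 2 m') ++ [(Lb, None)]).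
  change ([Leaf La], @nil nat, @nil nat) with s0.
  unfold blk. cbn [run].
  apply (stage_inv (fun x => length (st_c x) = 1%nat /\ length (st_e x) = 0%nat)).
  - intros x p [H1 H2] _. rewrite st_e_merge. split; auto.
    destruct (st_c_merge x p) as [E'|E']; rewrite E'; auto. rewrite length_incr; auto.
  - split; reflexivity.
  - intros y [H1 H2].
    apply (stage_inv (fun x => length (st_c x) = 2%nat /\ length (st_e x) = 1%nat)).
    + intros x p [H3 H4] _. rewrite st_e_merge. split; auto.
      destruct (st_c_merge x p) as [E'|E']; rewrite E'; auto. rewrite length_incr; auto.
    + rewrite st_c_open, st_e_open, st_c_close, st_e_close. simpl. split; lia.
    + intros z [H3 H4]. unfold REST, phi. apply run_hist.
      * rewrite st_c_close. lia.
      * rewrite st_e_close. simpl. lia.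
Qed.

Definition p1 n f := run (blk f (gbranch n) 1) (fun w => ind (Fi 1 w)) s0.
Definition b1 n f := run (blk f (gbranch n) 1) (fun w => ind (Fi 1 w) * Xi 1 w) s0.
Definition a1 n f := run (blk f (gbranch n) 1) (fun w => ind (Fi 1 w) * Xi 1 w ^ 2) s0.

Lemma Fi1_eq x : Fi 1 x = Nat.eqb (nth 1 (rev (st_e x)) 0%nat) 1.
Proof. destruct x as [[ls c] e]; reflexivity. Qed.
Lemma Xi1_eq x : Xi 1 x = INR (nth 0 (rev (st_c x)) 0%nat + nth 1 (rev (st_c x)) 0%nat).
Proof. destruct x as [[ls c] e]; reflexivity. Qed.

Lemma p1_eq n f : (1 <= nblocks n)%nat -> Prob_cat n f (Fi 1) = p1 n f.
Proof.
  intro Hm. unfold Prob_cat, p1.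
  set (Phi := fun (a b e : nat) => ind (Nat.eqb e 1)).
  etransitivity; [apply (Ecat_ext n f _ (fun x => Phi (nth 0 (rev (st_c x)) 0%nat)
       (nth 1 (rev (st_c x)) 0%nat) (nth 1 (rev (st_e x)) 0%nat))); intro; unfold Phi; rewrite Fi1_eq; reflexivity|].
  etransitivity; [apply (Ecat_hist n f Phi Hm)|].
  apply run_ext. intro x. unfold Phi. rewrite Fi1_eq. reflexivity.
Qed.

Lemma b1_eq n f : (1 <= nblocks n)%nat -> Ecat n f (fun s => Xi 1 s * ind (Fi 1 s)) = b1 n f.
Proof.
  intro Hm. unfold b1.
  set (Phi := fun (a b e : nat) => INR (a + b) * ind (Nat.eqb e 1)).
  etransitivity; [apply (Ecat_ext n f _ (fun x => Phi (nth 0 (rev (st_c x)) 0%nat)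
       (nth 1 (rev (st_c x)) 0%nat) (nth 1 (rev (st_e x)) 0%nat))); intro; unfold Phi; rewrite Fi1_eq, Xi1_eq; reflexivity|].
  etransitivity; [apply (Ecat_hist n f Phi Hm)|].
  apply run_ext. intro x. unfold Phi. rewrite Fi1_eq, Xi1_eq. ring.
Qed.

Lemma a1_eq n f : (1 <= nblocks n)%nat -> Ecat n f (fun s => Xi 1 s ^ 2 * ind (Fi 1 s)) = a1 n f.
Proof.
  intro Hm. unfold a1.
  set (Phi := fun (a b e : nat) => INR (a + b) ^ 2 * ind (Nat.eqb e 1)).
  etransitivity; [apply (Ecat_ext n f _ (fun x => Phi (nth 0 (rev (st_c x)) 0%nat)
       (nth 1 (rev (st_c x)) 0%nat) (nth 1 (rev (st_e x)) 0%nat))); intro; unfold Phi; rewrite Fi1_eq, Xi1_eq; reflexivity|].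
  etransitivity; [apply (Ecat_hist n f Phi Hm)|].
  apply run_ext. intro x. unfold Phi. rewrite Fi1_eq, Xi1_eq. ring.
Qed.

Lemma Kop_ext n f Q1 Q2 X : (forall y, Q1 y = Q2 y) -> Kop n f Q1 X = Kop n f Q2 X.
Proof. intro H. replace Q1 with Q2; auto. apply functional_extensionality; auto. Qed.

Lemma K_quad n f al0 al1 al2 X :
  Kop n f (fun y => al0 + al1 * y + al2 * y ^ 2) X =
  al0 * p1 n f + al1 * (p1 n f * X + b1 n f) + al2 * (p1 n f * X ^ 2 + 2 * X * b1 n f + a1 n f).
Proof.
  unfold Kop, p1, b1, a1.
  rewrite (run_ext _ _ (fun w => (al0 + al1 * X + al2 * X ^ 2) * ind (Fi 1 w) +
              1 * ((al1 + 2 * al2 * X) * (ind (Fi 1 w) * Xi 1 w) + al2 * (ind (Fi 1 w) * Xi 1 w ^ 2))))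
    by (intro; ring).
  rewrite run_lin, Rmult_1_l, run_lin. ring.
Qed.

Lemma K1 n f : forall k X, Kiter n f k (fun _ => 1) X = p1 n f ^ k.
Proof.
  induction k; intro X; [reflexivity|].
  change (Kiter n f (S k) (fun _ => 1) X) with (Kop n f (Kiter n f k (fun _ => 1)) X).
  rewrite (Kop_ext n f _ (fun y => p1 n f ^ k + 0 * y + 0 * y ^ 2)) by (intro; rewrite IHk; ring).
  rewrite K_quad. simpl. ring.
Qed.

Lemma K2 n f : p1 n f <> 0 -> forall k X,
  Kiter n f k (fun x => x + 1) X = p1 n f ^ k * (X + 1 + INR k * (b1 n f / p1 n f)).
Proof.
  intro HP. induction k; intro X; [simpl; ring|].
  change (Kiter n f (S k) (fun x => x + 1) X) with (Kop n f (Kiter n f k (fun x => x + 1)) X).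
  rewrite (Kop_ext n f _ (fun y => p1 n f ^ k * (1 + INR k * (b1 n f / p1 n f)) + p1 n f ^ k * y + 0 * y ^ 2))
    by (intro; rewrite IHk; ring).
  rewrite K_quad. rewrite S_INR. simpl. field. auto.
Qed.

Lemma K3 n f : p1 n f <> 0 -> forall k X,
  Kiter n f k (fun x => (x + 1) ^ 2) X =
  p1 n f ^ k * ((X + 1 + INR k * (b1 n f / p1 n f)) ^ 2
                + INR k * (a1 n f / p1 n f - (b1 n f / p1 n f) ^ 2)).
Proof.
  intro HP. induction k; intro X; [simpl; ring|].
  change (Kiter n f (S k) (fun x => (x + 1) ^ 2) X) with (Kop n f (Kiter n f k (fun x => (x + 1) ^ 2)) X).
  set (mu := b1 n f / p1 n f). set (v := a1 n f / p1 n f - mu ^ 2).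
  rewrite (Kop_ext n f _ (fun y => p1 n f ^ k * ((1 + INR k * mu) ^ 2 + INR k * v)
                          + (2 * p1 n f ^ k * (1 + INR k * mu)) * y + p1 n f ^ k * y ^ 2))
    by (intro; rewrite IHk; fold mu v; ring).
  rewrite K_quad. rewrite S_INR. unfold v, mu. simpl. field. auto.
Qed.

Lemma nblocks_INR n : (4 <= n)%nat -> Nat.Even n -> (INR n - 2) / 2 = INR (nblocks n) /\ (1 <= nblocks n)%nat.
Proof.
  intros H4 [r Hr]. subst n. unfold nblocks.
  replace (2 * r - 2)%nat with ((r - 1) * 2)%nat by lia. rewrite Nat.div_mul by lia.
  split; [|lia]. rewrite minus_INR by lia. rewrite mult_INR. simpl (INR 1). simpl (INR 2). field.
Qed.

Theorem lemma3 (n : nat) (f : R) :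
  (4 <= n)%nat -> Nat.Even n -> 0 < f ->
  Var_cat n f dg_ab >=
    (INR n - 2) / 2 * CondVar_cat n f (Xi 1) (Fi 1) * Prob_cat n f (Fall n).
Proof.
  intros H4 Hev Hf.
  destruct (nblocks_INR n H4 Hev) as [Hmn Hm]. rewrite Hmn.
  assert (Hn1 : (1 <= n)%nat) by lia.
  assert (Hf0 : 0 <= f) by lra.
  set (m := nblocks n) in *.
  set (P := p1 n f).
  assert (HP0 : 0 <= P).
  { unfold P. rewrite <- p1_eq by auto. unfold Prob_cat. apply Ecat_pos; auto.
    intro x. unfold ind. destruct (Fi 1 x); lra. }
  assert (HpF : Prob_cat n f (Fall n) = P ^ m).
  { unfold Prob_cat. rewrite (Ecat_ext n f _ (Hq n (fun _ => 1))) by (intro; unfold Hq; ring).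
    rewrite Ecat_Hq. apply K1. }
  set (mud := Ecat n f dg_ab).
  set (I := fun x => ind (Fall n x)).
  assert (HI01 : forall x, 0 <= I x <= 1) by (intro x; unfold I, ind; destruct (Fall n x); lra).
  set (Bq := Ecat n f (Hq n (fun y => y))).
  set (Aq := Ecat n f (Hq n (fun y => y ^ 2))).
  assert (HV1 : Var_cat n f dg_ab = Ecat n f (fun x => (dg_ab x - mud) ^ 2)).
  { unfold Var_cat. fold mud.
    rewrite (Ecat_ext n f (fun x => (dg_ab x - mud) ^ 2)
               (fun x => 1 * dg_ab x ^ 2 + 1 * ((- 2 * mud) * dg_ab x + mud ^ 2 * 1))) by (intro; ring).
    rewrite Ecat_lin, Ecat_lin. fold mud. rewrite Ecat_const. ring. }
  assert (HV2 : Ecat n f (fun x => (dg_ab x - mud) ^ 2 * I x) <= Ecat n f (fun x => (dg_ab x - mud) ^ 2)).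
  { apply Ecat_mono; auto. intro x. pose proof (HI01 x). pose proof (pow2_ge_0 (dg_ab x - mud)). nra. }
  assert (HV3 : Ecat n f (fun x => (dg_ab x - mud) ^ 2 * I x) = Aq - 2 * mud * Bq + mud ^ 2 * P ^ m).
  { rewrite (Ecat_ext n f (fun x => (dg_ab x - mud) ^ 2 * I x)
               (fun x => 1 * Hq n (fun y => y ^ 2) x + 1 * ((- 2 * mud) * Hq n (fun y => y) x + mud ^ 2 * I x)))
      by (intro; unfold Hq, I; ring).
    rewrite Ecat_lin, Ecat_lin. fold Aq Bq. rewrite <- HpF. unfold Prob_cat. fold I. ring. }
  rewrite HpF, HV1.
  destruct (Req_dec P 0) as [HP|HP].
  - rewrite HP. rewrite pow_i by lia. rewrite Rmult_0_r.
    apply Rle_ge. apply Ecat_pos; auto. intro; apply pow2_ge_0.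
  - assert (HCV : CondVar_cat n f (Xi 1) (Fi 1) = a1 n f / P - (b1 n f / P) ^ 2).
    { unfold CondVar_cat. rewrite p1_eq, a1_eq, b1_eq by auto. reflexivity. }
    rewrite HCV.
    assert (HB : Bq = P ^ m * (0 + 1 + INR m * (b1 n f / P))).
    { unfold Bq. rewrite Ecat_Hq. apply K2. auto. }
    assert (HA : Aq = P ^ m * ((0 + 1 + INR m * (b1 n f / P)) ^ 2 + INR m * (a1 n f / P - (b1 n f / P) ^ 2))).
    { unfold Aq. rewrite Ecat_Hq. apply K3. auto. }
    apply Rle_ge. eapply Rle_trans; [| apply HV2]. rewrite HV3, HA, HB.
    set (mu := b1 n f / P). set (v := a1 n f / P - mu ^ 2).
    assert (0 <= P ^ m * (1 + INR m * mu - mud) ^ 2).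
    { apply Rmult_le_pos; [apply pow_le; auto| apply pow2_ge_0]. }
    nra.
Qed.
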